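(* Let $\mathfrak{h}\ge2$ be such that level $\mathfrak{h}$ of the hierarchy is defined, i.e. $\nu_{\mathfrak{h}-1}\ge2$. Then $\Gamma^{\star,\mathfrak{h}}>\Gamma^{\star,\mathfrak{h}-1}$.
   Context: Setting. Let $\Omega$ be a finite set with a connected undirected graph structure; write $\eta\sim\xi$ if $\{\eta,\xi\}$ is an edge. Let $\mathbb{H}:\Omega\to\mathbb{R}$. Paths and heights. A path $\omega:\eta\to\xi$ is a sequence $(\omega_n)_{n=0}^N$ with $\omega_0=\eta$, $\omega_N=\xi$ and $\omega_n\sim\omega_{n+1}$ ($N=0$ allowed). Its height is $\Phi_\omega:=\max_n\mathbb{H}(\omega_n)$. Set $\Phi(\eta,\xi):=\min_{\omega:\eta\to\xi}\Phi_\omega$. For nonempty sets, $\Phi(\mathcal{A},\mathcal{B}):=\min_{\eta\in\mathcal{A},\xi\in\mathcal{B}}\Phi(\eta,\xi)$, and $\Phi(\mathcal{A},\eta):=\Phi(\mathcal{A},\{\eta\})$. Ground states. $\mathcal{S}:=\operatorname{argmin}_\Omega\mathbb{H}$, $\overline{\Phi}:=\max_{s,s'\in\mathcal{S}}\Phi(s,s')$, and $\overline{\Omega}:=\{\eta:\Phi(\mathcal{S},\eta)\le\overline{\Phi}\}$. Sets. For $\mathcal{A}\subseteq\Omega$: $\mathcal{F}(\mathcal{A}):=\operatorname{argmin}_{\mathcal{A}}\mathbb{H}$; $\partial\mathcal{A}:=\{\eta\notin\mathcal{A}:\eta\sim\xi\text{ for some }\xi\in\mathcal{A}\}$; $\partial^\star\mathcal{A}:=\mathcal{F}(\partial\mathcal{A})$.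 A set is connected if any two of its points are joined by a path inside it. Stable plateaux and cycles. A stable plateau is a nonempty connected set $\mathcal{P}$ with constant energy $\mathbb{H}(\mathcal{P})$ such that $\mathbb{H}>\mathbb{H}(\mathcal{P})$ on $\partial\mathcal{P}$. A cycle is a nonempty connected $\mathcal{C}$ with $\max_{\mathcal{C}}\mathbb{H}<\min_{\partial\mathcal{C}}\mathbb{H}$. Its depth is $\Gamma^{\mathcal{C}}:=\min_{\partial\mathcal{C}}\mathbb{H}-\min_{\mathcal{C}}\mathbb{H}$. General construction (C). Let $\mathscr{C}$ be a collection of pairwise disjoint cycles contained in $\overline{\Omega}$ with $|\mathscr{C}|\ge2$, and let $\Gamma^\star>0$. Put - $\mathscr{C}^\star:=\{\mathcal{C}\in\mathscr{C}:\Gamma^{\mathcal{C}}\ge\Gamma^\star\}$ and $\mathscr{C}^\sharp:=\{\mathcal{C}\in\mathscr{C}:\Gamma^{\mathcal{C}}<\Gamma^\star\}$; - $\mathscr{P}^{\mathscr{C}}:=\{\mathcal{F}(\mathcal{C}):\mathcal{C}\in\mathscr{C}\}$ and $\mathscr{P}^{\mathscr{C}^\star}:=\{\mathcal{F}(\mathcal{C}):\mathcal{C}\in\mathscr{C}^\star\}$; - $\Delta^{\mathscr{C}}:=\overline{\Omega}\setminus\bigcup_{\mathcal{C}\in\mathscr{C}}\mathcal{C}$. Let $\mathfrak{X}^{\mathscr{C}}$ be the continuous-time Markov chain on $\Omega^{\mathscr{C}}:=\Delta^{\mathscr{C}}\cup\mathscr{P}^{\mathscr{C}}$, in which each $\mathcal{F}(\mathcal{C})$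 is treated as a single point. Its rates are: - $\mathfrak{R}^{\mathscr{C}}(\eta,\xi)=1$ for $\eta,\xi\in\Delta^{\mathscr{C}}$ with $\eta\sim\xi$ and $\mathbb{H}(\xi)\le\mathbb{H}(\eta)$; - $\mathfrak{R}^{\mathscr{C}}(\eta,\mathcal{F}(\mathcal{C}))=|\{\zeta\in\mathcal{C}:\eta\sim\zeta\}|$ for $\eta\in\Delta^{\mathscr{C}}\cap\partial\mathcal{C}$; - $\mathfrak{R}^{\mathscr{C}}(\mathcal{F}(\mathcal{C}),\eta)=|\mathcal{F}(\mathcal{C})|^{-1}|\{\zeta\in\mathcal{C}:\eta\sim\zeta\}|$ if $\Gamma^{\mathcal{C}}\le\Gamma^\star$ and $\eta\in\partial^\star\mathcal{C}$; - all other rates are $0$. The trace chain $\mathfrak{X}^{\mathscr{C}^\star}$ on $\mathscr{P}^{\mathscr{C}^\star}$ has rates, for distinct $\mathcal{C},\mathcal{C}'\in\mathscr{C}^\star$, $$\mathfrak{R}^{\mathscr{C}^\star}(\mathcal{F}(\mathcal{C}),\mathcal{F}(\mathcal{C}')):=\sum_{\eta\in\Delta^{\mathscr{C}}}\mathfrak{R}^{\mathscr{C}}(\mathcal{F}(\mathcal{C}),\eta)\,\mathbf{P}^{\mathscr{C}}_\eta[\mathcal{T}_{\mathcal{F}(\mathcal{C}')}=\mathcal{T}_{\mathscr{P}^{\mathscr{C}^\star}}].$$ Here $\mathbf{P}^{\mathscr{C}}_\eta$ is the law of $\mathfrak{X}^{\mathscr{C}}$ started at $\eta$, and $\mathcal{T}_{\mathcal{A}}$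 is the hitting time of $\mathcal{A}$. Hierarchy. Let $\mathscr{P}^1=\{\mathcal{P}_1^1,\dots,\mathcal{P}^1_{\nu_0}\}$ be the collection of all stable plateaux contained in $\overline{\Omega}$, and assume $\nu_0\ge2$. Suppose that at some level $\mathfrak{h}\ge1$ the sets $\mathcal{P}^{\mathfrak{h}}_1,\dots,\mathcal{P}^{\mathfrak{h}}_{\nu_{\mathfrak{h}-1}}$ are defined, with $\nu_{\mathfrak{h}-1}\ge2$. Then define: - $\mathbb{H}(\mathcal{P}^{\mathfrak{h}}_i):=\min_{\mathcal{P}^{\mathfrak{h}}_i}\mathbb{H}$; - $\mathscr{P}^{\star,\mathfrak{h}}:=\{\mathcal{P}^{\mathfrak{h}}_i:i\in[1,\nu_{\mathfrak{h}-1}]\}$; - $\breve{\mathcal{P}}^{\mathfrak{h}}_i:=\bigcup_{j\ne i}\mathcal{P}^{\mathfrak{h}}_j$; - $\Gamma^{\mathfrak{h}}_i:=\Phi(\mathcal{P}^{\mathfrak{h}}_i,\breve{\mathcal{P}}^{\mathfrak{h}}_i)-\mathbb{H}(\mathcal{P}^{\mathfrak{h}}_i)$ and $\Gamma^{\star,\mathfrak{h}}:=\min_i\Gamma_i^{\mathfrak{h}}$; - $\mathcal{V}^{\mathfrak{h}}_i:=\{\eta\in\Omega:\Phi(\mathcal{P}^{\mathfrak{h}}_i,\eta)-\mathbb{H}(\mathcal{P}^{\mathfrak{h}}_i)<\Gamma^{\mathfrak{h}}_i\}$. Set $\mathscr{C}^1:=\{\mathcal{V}^1_i:i\in[1,\nu_0]\}$.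 For $\mathfrak{h}\ge2$, set $$\mathscr{C}^{\mathfrak{h}}:=\{\mathcal{V}^{\mathfrak{h}}_i:i\in[1,\nu_{\mathfrak{h}-1}]\}\cup\{\mathcal{C}\in\mathscr{C}^{\star,\mathfrak{h}-1}_{\rm tr}\cup\mathscr{C}^{\sharp,\mathfrak{h}-1}:\mathcal{C}\cap\mathcal{V}^{\mathfrak{h}}_i=\emptyset\ \forall i\}.$$ Apply (C) to $(\mathscr{C}^{\mathfrak{h}},\Gamma^{\star,\mathfrak{h}})$. Write $\mathscr{C}^{\star,\mathfrak{h}}:=(\mathscr{C}^{\mathfrak{h}})^\star$ and $\mathscr{C}^{\sharp,\mathfrak{h}}:=(\mathscr{C}^{\mathfrak{h}})^\sharp$. Let $\mathfrak{X}^{\star,\mathfrak{h}}$ be the trace chain of (C) on $\mathscr{P}^{(\mathscr{C}^{\mathfrak{h}})^\star}$. Decompose $\mathscr{P}^{(\mathscr{C}^{\mathfrak{h}})^\star}$ into the closed communicating classes $\mathscr{P}^{\star,\mathfrak{h}}_1,\dots,\mathscr{P}^{\star,\mathfrak{h}}_{\nu_{\mathfrak{h}}}$ of $\mathfrak{X}^{\star,\mathfrak{h}}$ and the set $\mathscr{P}^{\star,\mathfrak{h}}_{\rm tr}$ of transient elements. Let $\mathscr{C}^{\star,\mathfrak{h}}_m:=\{\mathcal{C}\in\mathscr{C}^{\star,\mathfrak{h}}:\mathcal{F}(\mathcal{C})\in\mathscr{P}^{\star,\mathfrak{h}}_m\}$ for $m\in\{1,\dots,\nu_{\mathfrak{h}},{\rm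 tr}\}$. If $\nu_{\mathfrak{h}}\ge2$, define $\mathcal{P}^{\mathfrak{h}+1}_i:=\bigcup_{\mathcal{P}\in\mathscr{P}^{\star,\mathfrak{h}}_i}\mathcal{P}$ for $i\in[1,\nu_{\mathfrak{h}}]$ and continue to level $\mathfrak{h}+1$. The terminal level $\mathfrak{m}$ is the first $\mathfrak{h}$ with $\nu_{\mathfrak{h}}=1$. Finally, $\mathscr{P}^{\star,\mathfrak{h}}_{\rm rec}:=\mathscr{P}^{\star,\mathfrak{h}}_1\cup\dots\cup\mathscr{P}^{\star,\mathfrak{h}}_{\nu_{\mathfrak{h}}}$. Here $[a,b]$ denotes the set of integers from $a$ to $b$. *)

(* Defs.v *)
From HB Require Import structures.
From mathcomp Require Import all_boot all_order all_algebra.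
From mathcomp Require Import boolp reals topology normedtype sequences.
Set Implicit Arguments. Unset Strict Implicit. Unset Printing Implicit Defensive.
Import Order.TTheory GRing.Theory Num.Theory numFieldNormedType.Exports.
Local Open Scope ring_scope.

Section Hierarchy.
Context (R : realType) (T : finType) (adj : rel T) (H : T -> R).

Definition minOver (S : finType) (P : pred S) (f : S -> R) : R :=
  match [pick s | P s] with
  | Some s0 => \big[Num.min/f s0]_(s | P s) f s
  | None => 0 end.
Definition maxOver (S : finType) (P : pred S) (f : S -> R) : R :=
  match [pick s | P s] with
  | Some s0 => \big[Num.max/f s0]_(s | P s) f s
  | None => 0 end.

Definition Hmin (A : {set T}) : R := minOver (mem A) H.
Definition Fmin (A : {set T}) : {set T} := [set x in A | H x == Hmin A].

Definition bdry (A : {set T}) : {set T} :=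
  [set x | (x \notin A) && [exists y in A, adj x y]].
Definition bdry_star (A : {set T}) : {set T} := Fmin (bdry A).

(* a path omega : x -> y is x :: p with [path adj x p] and [last x p = y] *)
Definition path_height (x : T) (p : seq T) : R :=
  \big[Num.max/H x]_(z <- x :: p) H z.
Definition is_path (x y : T) (p : seq T) : Prop := path adj x p /\ last x p = y.

(* Phi(x,y) = min over paths x -> y of their heights.  Every path height is a
   value H z, so the set of path heights is {H z | z in Zxy} below. *)
Definition path_heights_at (x y : T) : {set T} :=
  [set z | `[< exists p, is_path x y p /\ path_height x p = H z >] ].
Definition Phi (x y : T) : R := minOver (mem (path_heights_at x y)) H.

Definition PhiS (A B : {set T}) : R :=
  minOver (fun ab : T * T => (ab.1 \in A) && (ab.2 \in B)) (fun ab => Phi ab.1 ab.2).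

Definition Sgr : {set T} := Fmin setT.
Definition Phibar : R :=
  maxOver (fun ss : T * T => (ss.1 \in Sgr) && (ss.2 \in Sgr)) (fun ss => Phi ss.1 ss.2).
Definition Omegabar : {set T} := [set x | PhiS Sgr [set x] <= Phibar].

Definition set_connected (A : {set T}) : Prop :=
  forall x y, x \in A -> y \in A -> exists p, is_path x y p /\ all (mem A) p.
Definition stable_plateau (P : {set T}) : Prop :=
  [/\ P != set0, set_connected P,
      (forall x y, x \in P -> y \in P -> H x = H y) &
      (forall x y, x \in bdry P -> y \in P -> H y < H x)].

Definition depth (C : {set T}) : R := Hmin (bdry C) - Hmin C.

(* Input: Pfam = {P^h_i}, Cold = C^{*,h-1}_tr \cup C^{#,h-1} (empty at h = 1). *)
Section Level.
Variables (Pfam Cold : {set {set T}}).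

Definition breve (P : {set T}) : {set T} := \bigcup_(Q in Pfam | Q != P) Q.
Definition GammaP (P : {set T}) : R := PhiS P (breve P) - Hmin P.
Definition Gstar_lvl : R := minOver (mem Pfam) GammaP.
Definition Vset (P : {set T}) : {set T} :=
  [set x | PhiS P [set x] - Hmin P < GammaP P].

Definition Ccol : {set {set T}} :=
  [set Vset P | P in Pfam] :|:
  [set C in Cold | [forall P in Pfam, [disjoint C & Vset P]]].

Definition Cstar : {set {set T}} := [set C in Ccol | Gstar_lvl <= depth C].
Definition Csharp : {set {set T}} := [set C in Ccol | depth C < Gstar_lvl].
Definition Delta : {set T} := Omegabar :\: \bigcup_(C in Ccol) C.

(* States of the chain X^C: singletons [set x] (x in Delta) and F(C) (C in Ccol).
   The rate function is defined on all of {set T}; it vanishes off the states. *)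
Definition rate (a b : {set T}) : R :=
  (\sum_(x in Delta) \sum_(y in Delta)
     (if (a == [set x]) && (b == [set y]) && adj x y && (H y <= H x)
      then 1 else 0))
  + (\sum_(C in Ccol) \sum_(x in Delta)
       (if (a == [set x]) && (b == Fmin C) && (x \in bdry C)
        then #|[set z in C | adj x z]|%:R else 0))
  + (\sum_(C in Ccol) \sum_(x in Delta)
       (if (a == Fmin C) && (b == [set x]) && (depth C <= Gstar_lvl)
           && (x \in bdry_star C)
        then #|[set z in C | adj x z]|%:R / #|Fmin C|%:R else 0)).

Definition total_rate (a : {set T}) : R := \sum_(b : {set T}) rate a b.

(* hitn n a B x = P_x[ the chain hits B within n jumps, and first at a ]  (a in B) *)
Fixpoint hitn (n : nat) (a : {set T}) (B : {set {set T}}) (x : {set T}) : R :=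
  match n with
  | 0 => if x == a then 1 else 0
  | n'.+1 =>
      if x == a then 1 else if x \in B then 0
      else if total_rate x == 0 then 0
      else \sum_(y : {set T}) rate x y / total_rate x * hitn n' a B y
  end.
Definition hitprob (a : {set T}) (B : {set {set T}}) (x : {set T}) : R :=
  limn (fun n => hitn n a B x).

Definition Pstar : {set {set T}} := [set Fmin C | C in Cstar].

Definition trace_rate (a b : {set T}) : R :=
  \sum_(x in Delta) rate a [set x] * hitprob b Pstar [set x].

Definition trace_edge : rel {set T} :=
  fun a b => [&& a \in Pstar, b \in Pstar, a != b & 0 < trace_rate a b].
Definition reach (a b : {set T}) : bool := connect trace_edge a b.
Definition recurrent (a : {set T}) : bool :=
  (a \in Pstar) && [forall b, (b \in Pstar) ==> reach a b ==> reach b a].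
Definition comm_class (a : {set T}) : {set {set T}} :=
  [set b in Pstar | reach a b && reach b a].
Definition closed_classes : {set {set {set T}}} :=
  [set comm_class a | a in [set a in Pstar | recurrent a]].
Definition transient : {set {set T}} := [set a in Pstar | ~~ recurrent a].
Definition nu_lvl : nat := #|closed_classes|.

Definition next_Pfam : {set {set T}} :=
  [set \bigcup_(Q in K) Q | K : {set {set T}} in closed_classes].
Definition Cstar_tr : {set {set T}} := [set C in Cstar | Fmin C \in transient].
Definition next_Cold : {set {set T}} := Cstar_tr :|: Csharp.
End Level.

Definition Pfam1 : {set {set T}} :=
  [set P : {set T} | (P \subset Omegabar) && `[< stable_plateau P >] ].

(* level h data (Pfam^h, C^{*,h-1}_tr \cup C^{#,h-1}); meaningful for h >= 1 *)
Fixpoint level (h : nat) : {set {set T}} * {set {set T}} :=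
  match h with
  | 0 | 1 => (Pfam1, set0)
  | h'.+1 => let L := level h' in (next_Pfam L.1 L.2, next_Cold L.1 L.2)
  end.

Definition Gamma_star (h : nat) : R := Gstar_lvl (level h).1.
Definition nu (h : nat) : nat :=
  if h is 0 then #|Pfam1| else nu_lvl (level h).1 (level h).2.

Definition level_defined (h : nat) : Prop := forall k, (k < h)%N -> (2 <= nu k)%N.

End Hierarchy.

(* Main.v *)
Require Import Defs.
From HB Require Import structures.
From mathcomp Require Import all_boot all_order all_algebra.
From mathcomp Require Import boolp reals topology normedtype sequences.
Import Order.TTheory GRing.Theory Num.Theory numFieldNormedType.Exports.
Local Open Scope ring_scope.
Set Implicit Arguments. Unset Strict Implicit. Unset Printing Implicit Defensive.
Section MinMax0.
Variable (R : realType).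
Lemma nmin_l (x y : R) : x <= y -> Num.min x y = x. Proof. exact: min_l. Qed.
Lemma nmin_r (x y : R) : y <= x -> Num.min x y = y. Proof. exact: min_r. Qed.
Lemma nmax_l (x y : R) : y <= x -> Num.max x y = x. Proof. exact: max_l. Qed.
Lemma nmax_r (x y : R) : x <= y -> Num.max x y = y. Proof. exact: max_r. Qed.
Lemma nge_max (x y z : R) : (Num.max x y <= z) = (x <= z) && (y <= z). Proof. exact: ge_max. Qed.
Lemma nle_max (x y z : R) : (z <= Num.max x y) = (z <= x) || (z <= y). Proof. exact: le_max. Qed.
Lemma nge_min (x y z : R) : (Num.min x y <= z) = (x <= z) || (y <= z). Proof. exact: ge_min. Qed.
Lemma nle_min (x y z : R) : (z <= Num.min x y) = (z <= x) && (z <= y). Proof. exact: le_min. Qed.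
Lemma ngt_max (x y z : R) : (Num.max x y < z) = (x < z) && (y < z). Proof. exact: gt_max. Qed.
Lemma nmin_le1 (x y : R) : Num.min x y <= x. Proof. by rewrite nge_min lexx. Qed.
Lemma nmax_ge1 (x y : R) : x <= Num.max x y. Proof. by rewrite nle_max lexx. Qed.
Lemma nmax_ge2 (x y : R) : y <= Num.max x y. Proof. by rewrite nle_max lexx orbT. Qed.
Lemma nmax_lub (x y t : R) : x <= t -> y <= t -> Num.max x y <= t.
Proof. by move=> ??; rewrite nge_max; apply/andP. Qed.
Lemma nmax_lt (x y t : R) : x < t -> y < t -> Num.max x y < t.
Proof. by move=> ??; rewrite ngt_max; apply/andP. Qed.
Lemma nmax_case (x y : R) : Num.max x y = x \/ Num.max x y = y.
Proof. case: (boolP (x <= y)) => h; [right; exact: nmax_r h|left; rewrite -ltNge in h; exact: nmax_l (ltW h)]. Qed.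
End MinMax0.
Section MinMax.
Variables (R : realType) (S : finType) (P : pred S) (f : S -> R).

Lemma minOver_le s : P s -> minOver P f <= f s.
Proof.
move=> Ps; rewrite /minOver; case: pickP => [s0 Ps0|/(_ s)]; last by rewrite Ps.
rewrite (bigD1 s) //=; exact: nmin_le1.
Qed.

Lemma minOver_ex : (exists s, P s) -> exists2 s, P s & minOver P f = f s.
Proof.
move=> [s Ps]; rewrite /minOver; case: pickP => [s0 Ps0|/(_ s)]; last by rewrite Ps.
apply: (big_ind (fun v => exists2 s, P s & v = f s)); first by exists s0.
  move=> x y [a Pa ->] [b Pb ->].
  by have [ab|ba] := leP (f a) (f b); [exists a => //; exact: nmin_l | exists b => //; exact: nmin_r (ltW _)].
by move=> i Pi; exists i.
Qed.

Lemma minOver_gt t : (exists s, P s) -> (forall s, P s -> t < f s) -> t < minOver P f.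
Proof. by move=> /minOver_ex [s Ps ->] /(_ s Ps). Qed.

Lemma minOver_ge t : (exists s, P s) -> (forall s, P s -> t <= f s) -> t <= minOver P f.
Proof. by move=> /minOver_ex [s Ps ->] /(_ s Ps). Qed.

Lemma maxOver_ge s : P s -> f s <= maxOver P f.
Proof.
move=> Ps; rewrite /maxOver; case: pickP => [s0 Ps0|/(_ s)]; last by rewrite Ps.
rewrite (bigD1 s) //=; exact: nmax_ge1.
Qed.
End MinMax.

Section Basics.
Variables (R : realType) (T : finType) (adj : rel T) (H : T -> R).
Hypothesis adj_sym : symmetric adj.
Hypothesis conn : forall x y : T, connect adj x y.

Local Notation Phi := (Phi adj H).
Local Notation PhiS := (PhiS adj H).
Local Notation bdry := (bdry adj).
Local Notation Hmin := (Hmin H).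

Lemma ph_ge x p z : z \in x :: p -> H z <= path_height H x p.
Proof.
rewrite /path_height; elim: (x :: p) z => // a l IH z; rewrite inE big_cons.
case/orP=> [/eqP->|/IH hz]; first exact: nmax_ge1.
exact: le_trans hz (nmax_ge2 _ _).
Qed.

Lemma ph_le x p t : (forall z, z \in x :: p -> H z <= t) -> path_height H x p <= t.
Proof.
move=> h; rewrite /path_height big_seq; apply: (big_ind (fun v => v <= t)).
- by apply: h; rewrite mem_head.
- by move=> ???; exact: nmax_lub.
- by move=> i /h.
Qed.

Lemma ph_ex x p : exists2 z, z \in x :: p & path_height H x p = H z.
Proof.
rewrite /path_height big_seq.
apply: (big_ind (fun v => exists2 z, z \in x :: p & v = H z)).
- by exists x; rewrite ?mem_head.
- move=> a b [za ha ->] [zb hb ->].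
  by case: (nmax_case (H za) (H zb)) => ->; [exists za|exists zb].
- by move=> i ip; exists i.
Qed.

Definition hpath (t : R) (x y : T) (p : seq T) :=
  [/\ path adj x p, last x p = y & forall z, z \in x :: p -> H z <= t].

Lemma Phi_le_hpath t x y p : hpath t x y p -> Phi x y <= t.
Proof.
case=> pp ly hz; have [z zp hpz] := ph_ex x p.
have zin : z \in path_heights_at adj H x y.
  by rewrite inE; apply/asboolP; exists p; split => //; split.
apply: le_trans (minOver_le H zin) _; rewrite -hpz; exact: ph_le.
Qed.

Lemma Phi_hpath x y : exists p, hpath (Phi x y) x y p.
Proof.
have [p pp lp] := connectP (conn x y).
have : exists z, z \in path_heights_at adj H x y.
  have [z zp hpz] := ph_ex x p.
  by exists z; rewrite inE; apply/asboolP; exists p; split => //; split.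
case/(minOver_ex H) => z; rewrite inE => /asboolP [q [[qp ql] hq]] hz.
exists q; split => // w wq; rewrite /Phi hz -hq; exact: ph_ge.
Qed.

Lemma Phi_leP t x y : Phi x y <= t <-> exists p, hpath t x y p.
Proof.
split; last by case=> p; exact: Phi_le_hpath.
move=> le; have [p [pp lp hp]] := Phi_hpath x y.
by exists p; split => // z /hp hz; exact: le_trans hz le.
Qed.

Lemma Phi_ge_l x y : H x <= Phi x y.
Proof. by have [p [_ _ hp]] := Phi_hpath x y; apply: hp; rewrite mem_head. Qed.

Lemma Phi_ge_r x y : H y <= Phi x y.
Proof. by have [p [_ <- hp]] := Phi_hpath x y; apply: hp; rewrite mem_last. Qed.

Lemma Phi_refl x : Phi x x = H x.
Proof.
apply/eqP; rewrite eq_le Phi_ge_l andbT.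
by apply: (@Phi_le_hpath _ _ _ [::]); split => // z; rewrite inE => /eqP->.
Qed.

Lemma Phi_adj x y : adj x y -> Phi x y <= Num.max (H x) (H y).
Proof.
move=> xy; apply: (@Phi_le_hpath _ _ _ [:: y]); split => //=; first by rewrite xy.
move=> z; rewrite !inE => /orP[/eqP->|/eqP->]; [exact: nmax_ge1|exact: nmax_ge2].
Qed.

Lemma Phi_trans x y z : Phi x z <= Num.max (Phi x y) (Phi y z).
Proof.
have [p [pp lp hp]] := Phi_hpath x y; have [q [qp lq hq]] := Phi_hpath y z.
apply: (@Phi_le_hpath _ _ _ (p ++ q)); split.
- by rewrite cat_path pp lp qp.
- by rewrite last_cat lp.
- move=> w; rewrite -cat_cons mem_cat => /orP[/hp h|wq].
    exact: le_trans h (nmax_ge1 _ _).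
  by apply: le_trans (nmax_ge2 _ _); apply: hq; rewrite inE wq orbT.
Qed.

Lemma Phi_trans_lt x y z t : Phi x y < t -> Phi y z < t -> Phi x z < t.
Proof. by move=> h1 h2; apply: le_lt_trans (Phi_trans x y z) _; exact: nmax_lt. Qed.

Lemma Phi_trans_le x y z t : Phi x y <= t -> Phi y z <= t -> Phi x z <= t.
Proof. by move=> h1 h2; apply: le_trans (Phi_trans x y z) _; exact: nmax_lub. Qed.

Lemma hpath_rev t x p : path adj x p -> (forall z, z \in x :: p -> H z <= t) ->
  Phi (last x p) x <= t.
Proof.
elim: p x => [|a l IH] x /=; first by rewrite Phi_refl => _ h; apply: h; rewrite mem_head.
case/andP=> xa pa hp.
apply: Phi_trans_le.
  apply: IH => // z zin; apply: hp; rewrite inE zin orbT //.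
apply: le_trans (Phi_adj _) _; first by rewrite adj_sym.
by apply: nmax_lub; apply: hp; rewrite !inE eqxx ?orbT.
Qed.

Lemma Phi_sym_le x y : Phi y x <= Phi x y.
Proof. by have [p [pp <- hp]] := Phi_hpath x y; exact: hpath_rev. Qed.

Lemma Phi_sym x y : Phi x y = Phi y x.
Proof. by apply/eqP; rewrite eq_le !Phi_sym_le. Qed.

Lemma path_exit (A : {set T}) x p : path adj x p -> x \in A -> last x p \notin A ->
  exists2 w, w \in p & w \in bdry A.
Proof.
elim: p x => [|a l IH] x /=; first by move=> _ ->.
case/andP=> xa pa xA la; case aA: (a \in A).
  by have [w wl wb] := IH a pa aA la; exists w => //; rewrite inE wl orbT.
exists a; rewrite ?mem_head // inE aA /=; apply/existsP; exists x.
by rewrite xA adj_sym.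
Qed.

Lemma Phi_exit (A : {set T}) x y : x \in A -> y \notin A ->
  exists2 w, w \in bdry A & H w <= Phi x y.
Proof.
move=> xA yA; have [p [pp lp hp]] := Phi_hpath x y.
have := path_exit pp xA; rewrite lp => /(_ yA) [w wp wb].
by exists w => //; apply: hp; rewrite inE wp orbT.
Qed.

Lemma hpath_closure (A : pred T) t x y p : hpath t x y p -> x \in A ->
  (forall u w, u \in A -> adj u w -> H w <= t -> w \in A) -> y \in A.
Proof.
case=> pp <- hp xA cl; elim: p x pp hp xA => [|a l IH] x //= /andP[xa pa] hp xA.
apply: IH => //; first by move=> z zin; apply: hp; rewrite inE zin orbT.
by apply: (cl x) => //; apply: hp; rewrite !inE eqxx orbT.
Qed.

Lemma Phi_closure (A : pred T) t x y : Phi x y <= t -> x \in A ->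
  (forall u w, u \in A -> adj u w -> H w <= t -> w \in A) -> y \in A.
Proof. by case/Phi_leP => p hp; exact: hpath_closure hp. Qed.


Local Notation Fmin := (Fmin H).
Local Notation Om := (Omegabar adj H).
Local Notation Phibar := (Phibar adj H).
Local Notation Sgr := (Sgr H).

Lemma PhiS_le (A B : {set T}) a b : a \in A -> b \in B -> PhiS A B <= Phi a b.
Proof.
move=> aA bB; rewrite /PhiS.
by apply: (@minOver_le _ _ (fun ab : T * T => (ab.1 \in A) && (ab.2 \in B)) _ (a, b)); rewrite /= aA bB.
Qed.

Lemma PhiS_ex (A B : {set T}) a0 b0 : a0 \in A -> b0 \in B ->
  exists a b, [/\ a \in A, b \in B & PhiS A B = Phi a b].
Proof.
move=> aA bB; rewrite /PhiS.
have [[a b] /= /andP[ha hb] ->] := @minOver_ex _ _ (fun ab : T * T => (ab.1 \in A) && (ab.2 \in B))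
   (fun ab => Phi ab.1 ab.2) (ex_intro _ (a0, b0) (introT andP (conj aA bB))).
by exists a, b.
Qed.

Lemma PhiS_gt (A B : {set T}) t a0 b0 : a0 \in A -> b0 \in B ->
  (forall a b, a \in A -> b \in B -> t < Phi a b) -> t < PhiS A B.
Proof. by move=> a0A b0B h; have [a [b [aA bB ->]]] := PhiS_ex a0A b0B; exact: h. Qed.

Lemma PhiS1_le (A : {set T}) a x : a \in A -> PhiS A [set x] <= Phi a x.
Proof. by move=> aA; apply: PhiS_le => //; rewrite inE. Qed.

Lemma PhiS1_ex (A : {set T}) a0 x : a0 \in A -> exists2 a, a \in A & PhiS A [set x] = Phi a x.
Proof.
move=> aA; have [a [b [ha]]] := PhiS_ex aA (set11 x).
by rewrite inE => /eqP-> ->; exists a.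
Qed.

Lemma Sgr_ex (x0 : T) : exists s, s \in Sgr.
Proof.
have [s _ hs] := @minOver_ex _ _ (mem [set: T]) H (ex_intro _ x0 (in_setT x0)).
by exists s; rewrite /Sgr /Defs.Fmin inE in_setT /Defs.Hmin hs eqxx.
Qed.

Lemma inOmP x : reflect (exists2 s, s \in Sgr & Phi s x <= Phibar) (x \in Om).
Proof.
rewrite /Omegabar inE; apply: (iffP idP).
  by have [s0 s0S] := Sgr_ex x; have [s sS ->] := PhiS1_ex x s0S; exists s.
by case=> s sS h; apply: le_trans (PhiS1_le x sS) h.
Qed.

Lemma Om_le x : x \in Om -> H x <= Phibar.
Proof. by case/inOmP=> s _ h; exact: le_trans (Phi_ge_r _ _) h. Qed.

Lemma Sgr_Phi s s' : s \in Sgr -> s' \in Sgr -> Phi s s' <= Phibar.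
Proof.
move=> sS s'S; rewrite /Phibar.
by apply: (@maxOver_ge _ _ (fun ss : T * T => (ss.1 \in Sgr) && (ss.2 \in Sgr)) _ (s, s')); rewrite /= sS s'S.
Qed.

Lemma Om_Phi x y : x \in Om -> y \in Om -> Phi x y <= Phibar.
Proof.
case/inOmP=> s sS hs; case/inOmP=> s' s'S hs'.
apply: (@Phi_trans_le _ s); first by rewrite Phi_sym.
exact: (Phi_trans_le (Sgr_Phi sS s'S) hs').
Qed.

Lemma Om_ext x y : x \in Om -> Phi x y <= Phibar -> y \in Om.
Proof.
case/inOmP=> s sS hs h; apply/inOmP; exists s => //.
exact: (Phi_trans_le hs h).
Qed.

Lemma Om_adj x y : x \in Om -> adj x y -> H y <= Phibar -> y \in Om.
Proof.
move=> xO xy hy; apply: (Om_ext xO); apply: le_trans (Phi_adj xy) _.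
by apply: nmax_lub => //; exact: Om_le.
Qed.

Lemma path_inU (U : {set T}) x p : x \in U ->
  path [rel a b | adj a b && (b \in U)] x p -> last x p \in U.
Proof. by elim: p x => //= a p IH x xU /andP[/andP[_ aU] pa]; exact: IH aU pa. Qed.

Lemma sealed_plateau (U : {set T}) (L : R) z1 : z1 \in U ->
  (forall z, z \in U -> H z <= L) -> (forall w, w \in bdry U -> L < H w) ->
  exists P : {set T}, P \subset U /\ stable_plateau adj H P.
Proof.
move=> z1U hU hb.
have [z0 z0U hz0] := @minOver_ex _ _ (mem U) H (ex_intro _ z1 z1U).
set m := minOver _ _ in hz0.
have {}z0U : z0 \in U by [].
have mle : forall z, z \in U -> m <= H z by move=> z zU; exact: minOver_le.
pose good v := (v \in U) && (H v == m).
pose e := [rel a b | [&& adj a b, good a & good b]].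
have esym : symmetric e by move=> a b /=; rewrite adj_sym; congr (_ && _); rewrite andbC.
have g0 : good z0 by rewrite /good z0U hz0 eqxx.
pose P := [set v | connect e z0 v].
have Pin : forall v, connect e z0 v -> v \in P by move=> v h; rewrite /P inE.
have Pout : forall v, v \in P -> connect e z0 v by move=> v; rewrite /P inE.
have goodP : forall v, v \in P -> good v.
  have gen : forall x p, good x -> path e x p -> good (last x p).
    by move=> x p; elim: p x => //= a l IH x gx /andP[/and3P[_ _ ga] pl]; apply: IH.
  by move=> v; rewrite inE => /connectP [p pp ->]; exact: gen.
exists P; split.
  by apply/subsetP => v /goodP /andP[].
split.
- by apply/set0Pn; exists z0; rewrite inE connect0.
- move=> x y; rewrite /P !inE => hx hy.
  have hx' : connect e x z0 by rewrite (sym_connect_sym esym).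
  have := connect_trans hx' hy.
  case/connectP => p pp ly; exists p; split; first split => //.
    by apply: sub_path pp => a b /andP[].
  apply/allP => v vp; apply: Pin; apply: connect_trans hx _.
  by apply: (path_connect pp); rewrite inE vp orbT.
- by move=> x y /goodP /andP[_ /eqP->] /goodP /andP[_ /eqP->].
- move=> x y; rewrite inE => /andP[xP /existsP [v /andP[vP xv]]] /goodP /andP[_ /eqP->].
  have /andP[vU /eqP hv] := goodP v vP.
  case xU: (x \in U).
    rewrite lt_neqAle mle // andbT; apply/negP => /eqP hx.
    move/negP: xP; apply; apply: Pin; apply: connect_trans (Pout v vP) _.
    by apply: connect1; rewrite /= adj_sym xv /good vU hv eqxx xU -hx eqxx.
  rewrite -hv; apply: le_lt_trans (hU v vU) (hb x _).
  by rewrite inE xU /=; apply/existsP; exists v; rewrite vU xv.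
Qed.

Lemma plateau_disj (P Q : {set T}) z : stable_plateau adj H P -> stable_plateau adj H Q ->
  z \in P -> z \in Q -> P = Q.
Proof.
have sub : forall P Q z, stable_plateau adj H P -> stable_plateau adj H Q ->
    z \in P -> z \in Q -> Q \subset P.
  move=> {}P {}Q {}z [_ _ cP bP] [_ sQ cQ _] zP zQ; apply/subsetP => q qQ.
  apply/negPn/negP => qP.
  have [p [[pp lp] aQ]] := sQ z q zQ qQ.
  have := path_exit pp zP; rewrite lp => /(_ qP) [w wp wb].
  have wQ : w \in Q by move/allP: aQ => /(_ w wp).
  by have := bP w z wb zP; rewrite (cQ w z wQ zQ) ltxx.
move=> sP sQ zP zQ; apply/eqP; rewrite eqEsubset.
by rewrite (sub P Q z) // (sub Q P z).
Qed.



Lemma Hmin_le (A : {set T}) z : z \in A -> Hmin A <= H z.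
Proof. by move=> zA; exact: minOver_le. Qed.

Lemma Hmin_ex (A : {set T}) z0 : z0 \in A -> exists2 z, z \in A & Hmin A = H z.
Proof. by move=> zA; exact: (@minOver_ex _ _ (mem A) H (ex_intro _ z0 zA)). Qed.

Lemma Hmin_ge (A : {set T}) t z0 : z0 \in A -> (forall z, z \in A -> t <= H z) -> t <= Hmin A.
Proof. by move=> /Hmin_ex [z zA ->] h; exact: h. Qed.

Lemma FminP (A : {set T}) z : reflect (z \in A /\ H z = Hmin A) (z \in Fmin A).
Proof. by rewrite /Defs.Fmin inE; apply: (iffP andP) => -[-> /eqP]. Qed.

Lemma Fmin_sub (A : {set T}) z : z \in Fmin A -> z \in A.
Proof. by case/FminP. Qed.

Lemma Fmin_ex (A : {set T}) z0 : z0 \in A -> exists z, z \in Fmin A.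
Proof. by move=> /Hmin_ex [z zA hz]; exists z; apply/FminP. Qed.

Lemma bdryP (A : {set T}) w : reflect (w \notin A /\ exists2 y, y \in A & adj w y) (w \in bdry A).
Proof.
rewrite /Defs.bdry inE; apply: (iffP andP) => -[wA h]; split => //.
  by case/existsP: h => y /andP[yA wy]; exists y.
by case: h => y yA wy; apply/existsP; exists y; rewrite yA.
Qed.

Lemma bdry_adj (A : {set T}) u w : u \in A -> w \notin A -> adj u w -> w \in bdry A.
Proof. by move=> uA wA uw; apply/bdryP; split => //; exists u; rewrite // adj_sym. Qed.

Definition depthT (C : {set T}) := Hmin (bdry C) - Hmin C.

Record goodC (C : {set T}) : Prop := GoodC {
  gC_ne : exists z, z \in C;
  gC_Om : forall z, z \in C -> z \in Om;
  gC_cyc : forall u w, u \in C -> w \in bdry C -> H u < H w;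
  gC_conn : forall z z', z \in C -> z' \in C -> Phi z z' < Hmin (bdry C);
  gC_bd : exists w, w \in bdry C;
  gC_bdle : Hmin (bdry C) <= Phibar }.

Lemma breveP (Pf : {set {set T}}) P y :
  reflect (exists2 Q, (Q \in Pf) && (Q != P) & y \in Q) (y \in breve Pf P).
Proof. exact: bigcupP. Qed.

Record Afacts (Pf Co : {set {set T}}) : Prop := {
  A_good : forall C, C \in Ccol adj H Pf Co -> goodC C;
  A_disj : forall C C' z, C \in Ccol adj H Pf Co -> C' \in Ccol adj H Pf Co ->
     z \in C -> z \in C' -> C = C' }.

Definition EpropG (Pf Co : {set {set T}}) := forall (U : {set T}) (L : R), (exists z, z \in U) ->
  (forall z, z \in U -> z \in Om) -> (forall z, z \in U -> H z <= L) ->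
  (forall w, w \in bdry U -> L < H w) ->
  (forall C, C \in Ccol adj H Pf Co -> (exists2 z, z \in C & z \in U) ->
      [/\ C \subset U, depth adj H C < Gstar_lvl adj H Pf & Hmin (bdry C) <= L]) -> False.

Definition PlG (Pf Co : {set {set T}}) := forall Pi : {set T}, Pi \subset Om ->
  stable_plateau adj H Pi -> exists2 C, C \in Ccol adj H Pf Co & exists2 z, z \in Pi & z \in C.

Record Inv (Pf Co : {set {set T}}) : Prop := {
  I_Pne : forall P, P \in Pf -> exists z, z \in P;
  I_POm : forall P z, P \in Pf -> z \in P -> z \in Om;
  I_P2 : (1 < #|Pf|)%N;
  I_Pc : forall P p p', P \in Pf -> p \in P -> p' \in P -> Phi p p' < PhiS P (breve Pf P);
  I_A : Afacts Pf Co;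
  I_Pl : PlG Pf Co;
  I_E : EpropG Pf Co }.

Section Vsec.
Variable Pf : {set {set T}}.
Hypothesis HPne : forall P, P \in Pf -> exists z, z \in P.
Hypothesis HPOm : forall P z, P \in Pf -> z \in P -> z \in Om.
Hypothesis HP2 : (1 < #|Pf|)%N.
Hypothesis HPc : forall P p p', P \in Pf -> p \in P -> p' \in P ->
  Phi p p' < PhiS P (breve Pf P).

Local Notation cP P := (PhiS P (breve Pf P)).
Local Notation V := (Vset adj H Pf).

Lemma VsetP P x : (x \in V P) = (PhiS P [set x] < cP P).
Proof. by rewrite /Vset inE /GammaP ltrD2r. Qed.

Lemma breve_ne P : P \in Pf -> exists y, y \in breve Pf P.
Proof.
move=> PP; have [Q1 [Q2 [Q1P Q2P ne]]] := card_gt1P HP2.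
have [Q QP QnP] : exists2 Q, Q \in Pf & Q != P.
  case: (eqVneq Q1 P) => [e|]; last by exists Q1.
  by exists Q2 => //; rewrite -e eq_sym.
have [y yQ] := HPne QP; exists y; apply/breveP; exists Q => //; by rewrite QP QnP.
Qed.

Lemma breve_Om P y : y \in breve Pf P -> y \in Om.
Proof. by case/breveP => Q /andP[QP _] yQ; exact: HPOm yQ. Qed.

Lemma cP_ex P : P \in Pf -> exists p q, [/\ p \in P, q \in breve Pf P & cP P = Phi p q].
Proof.
move=> PP; have [p0 p0P] := HPne PP; have [q0 q0b] := breve_ne PP.
exact: PhiS_ex p0P q0b.
Qed.

Lemma cP_le P : P \in Pf -> cP P <= Phibar.
Proof.
move=> PP; have [p [q [pP qb ->]]] := cP_ex PP.
by apply: Om_Phi; [exact: HPOm pP|exact: breve_Om qb].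
Qed.

Lemma V_sub P p : P \in Pf -> p \in P -> p \in V P.
Proof.
move=> PP pP; rewrite VsetP; apply: le_lt_trans (PhiS1_le p pP) _; exact: HPc.
Qed.

Lemma V_ex P x : P \in Pf -> x \in V P -> exists2 p, p \in P & Phi p x < cP P.
Proof.
move=> PP; rewrite VsetP; have [p0 p0P] := HPne PP.
by have [p pP ->] := PhiS1_ex x p0P; exists p.
Qed.

Lemma V_Om P x : P \in Pf -> x \in V P -> x \in Om.
Proof.
move=> PP /(V_ex PP) [p pP h]; apply: (Om_ext (HPOm PP pP)).
by apply: le_trans (ltW h) (cP_le PP).
Qed.

Lemma V_H P u : P \in Pf -> u \in V P -> H u < cP P.
Proof. by move=> PP /(V_ex PP) [p pP h]; exact: le_lt_trans (Phi_ge_r _ _) h. Qed.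

Lemma V_close P u w : P \in Pf -> u \in V P -> adj u w -> H w < cP P -> w \in V P.
Proof.
move=> PP uV uw hw; have [p pP hp] := V_ex PP uV; rewrite VsetP.
apply: le_lt_trans (PhiS1_le w pP) _; apply: Phi_trans_lt hp _.
by apply: le_lt_trans (Phi_adj uw) _; apply: nmax_lt => //; exact: V_H uV.
Qed.

Lemma V_bdry_ge P w : P \in Pf -> w \in bdry (V P) -> cP P <= H w.
Proof.
move=> PP /bdryP [wV [u uV wu]]; rewrite leNgt; apply/negP => hw.
by move: wV; rewrite (V_close PP uV _ hw) // adj_sym.
Qed.

Lemma V_bdry_ex P : P \in Pf -> exists2 w, w \in bdry (V P) & H w <= cP P.
Proof.
move=> PP; have [p [q [pP qb e]]] := cP_ex PP.
have qV : q \notin V P.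
  rewrite VsetP -leNgt; have [p' p'P ->] := PhiS1_ex q pP; exact: PhiS_le.
have [w wb hw] := Phi_exit (V_sub PP pP) qV.
by exists w; rewrite // e.
Qed.

Lemma V_Hmin_bdry P : P \in Pf -> Hmin (bdry (V P)) = cP P.
Proof.
move=> PP; have [w wb hw] := V_bdry_ex PP; apply/eqP; rewrite eq_le.
rewrite (le_trans (Hmin_le wb) hw) /=; apply: (Hmin_ge wb) => z zb; exact: V_bdry_ge.
Qed.

Lemma V_conn P z z' : P \in Pf -> z \in V P -> z' \in V P -> Phi z z' < cP P.
Proof.
move=> PP zV z'V; have [p pP hp] := V_ex PP zV; have [p' p'P hp'] := V_ex PP z'V.
apply: (@Phi_trans_lt _ p); first by rewrite Phi_sym.
exact: Phi_trans_lt (HPc PP pP p'P) hp'.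
Qed.

Lemma V_disj P Q z : P \in Pf -> Q \in Pf -> P != Q -> z \in V P -> z \in V Q -> False.
Proof.
move=> PP QP ne zP zQ; have [p pP hp] := V_ex PP zP; have [q qQ hq] := V_ex QP zQ.
have h1 : cP P <= Phi p q.
  apply: PhiS_le => //; apply/breveP; exists Q => //; by rewrite QP eq_sym.
have h2 : cP Q <= Phi q p.
  apply: PhiS_le => //; apply/breveP; exists P => //; by rewrite PP.
have h3 : Phi p q <= Num.max (Phi p z) (Phi z q) := Phi_trans _ _ _.
rewrite (Phi_sym z q) in h3; rewrite (Phi_sym q p) in h2.
case: (nmax_case (Phi p z) (Phi q z)) => e; rewrite e in h3.
- by move: (le_lt_trans (le_trans h1 h3) hp); rewrite ltxx.
- by move: (le_lt_trans (le_trans h2 h3) hq); rewrite ltxx.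
Qed.

Lemma GammaP_pos P : P \in Pf -> 0 < GammaP adj H Pf P.
Proof.
move=> PP; have [p pP] := HPne PP; rewrite /GammaP subr_gt0.
apply: le_lt_trans (Hmin_le pP) _; rewrite -(Phi_refl p); exact: HPc.
Qed.

Lemma Gstar_pos : 0 < Gstar_lvl adj H Pf.
Proof.
have [P PP] : exists P, P \in Pf by have [Q1 [Q2 [Q1P _ _]]] := card_gt1P HP2; exists Q1.
by apply: minOver_gt; [exists P|move=> Q QP; exact: GammaP_pos].
Qed.

Lemma V_depth P : P \in Pf -> Gstar_lvl adj H Pf <= depth adj H (V P).
Proof.
move=> PP; apply: le_trans (minOver_le _ PP) _.
have [p0 p0P] := HPne PP; have [p pP e] := Hmin_ex p0P.
rewrite /GammaP /depth V_Hmin_bdry // e lerD2l lerN2.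
exact: Hmin_le (V_sub PP pP).
Qed.

Lemma V_good P : P \in Pf -> goodC (V P).
Proof.
move=> PP; split.
- by have [p pP] := HPne PP; exists p; exact: V_sub.
- by move=> z; exact: V_Om.
- by move=> u w uV wb; apply: lt_le_trans (V_H PP uV) (V_bdry_ge PP wb).
- by move=> z z' zV z'V; rewrite V_Hmin_bdry //; exact: V_conn.
- by have [w wb _] := V_bdry_ex PP; exists w.
- by rewrite V_Hmin_bdry //; exact: cP_le.
Qed.

Variable Co : {set {set T}}.
Hypothesis HCo_good : forall C, C \in Co -> goodC C.
Hypothesis HCo_disj : forall C C' z, C \in Co -> C' \in Co -> z \in C -> z \in C' -> C = C'.

Lemma CcolP C : reflect ((exists2 P, P \in Pf & C = V P) \/
    (C \in Co /\ forall P, P \in Pf -> [disjoint C & V P])) (C \in Ccol adj H Pf Co).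
Proof.
rewrite /Ccol in_setU; apply: (iffP orP) => -[].
- by case/imsetP => P PP ->; left; exists P.
- by rewrite inE => /andP[CC /forall_inP h]; right; split.
- by case=> P PP ->; left; apply: imset_f.
- by case=> CC h; right; rewrite inE CC; apply/forall_inP.
Qed.

Lemma Afacts_build : Afacts Pf Co.
Proof.
split.
  move=> C /CcolP [[P PP ->]|[CC _]]; [exact: V_good|exact: HCo_good].
move=> C C' z /CcolP [[P PP ->]|[CC hC]] /CcolP [[Q QP ->]|[C'C hC']] zC zC'.
- case: (eqVneq P Q) => [-> //|ne]; case: (V_disj PP QP ne zC zC').
- by move: (disjointFr (hC' P PP) zC'); rewrite zC.
- by move: (disjointFr (hC Q QP) zC); rewrite zC'.
- exact: HCo_disj zC zC'.
Qed.

End Vsec.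
Section Level.
Variables (Pf Co : {set {set T}}).

Local Notation Ccol := (Ccol adj H Pf Co).
Local Notation Cstar := (Cstar adj H Pf Co).
Local Notation Csharp := (Csharp adj H Pf Co).
Local Notation Delta := (Delta adj H Pf Co).
Local Notation rate := (rate adj H Pf Co).
Local Notation total_rate := (total_rate adj H Pf Co).
Local Notation hitn := (hitn adj H Pf Co).
Local Notation hitprob := (hitprob adj H Pf Co).
Local Notation Pstar := (Pstar adj H Pf Co).
Local Notation trace_rate := (trace_rate adj H Pf Co).
Local Notation trace_edge := (trace_edge adj H Pf Co).
Local Notation reach := (reach adj H Pf Co).
Local Notation recurrent := (recurrent adj H Pf Co).
Local Notation comm_class := (comm_class adj H Pf Co).
Local Notation closed_classes := (closed_classes adj H Pf Co).
Local Notation Gam := (Gstar_lvl adj H Pf).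
Local Notation depth := (depth adj H).
Local Notation bdry_star := (bdry_star adj H).

Lemma DeltaP x : reflect (x \in Om /\ forall C, C \in Ccol -> x \notin C) (x \in Delta).
Proof.
rewrite /Defs.Delta in_setD; apply: (iffP andP) => -[h1 h2]; split => //.
  by move=> C CC; apply: contra h1 => xC; apply/bigcupP; exists C.
by apply/negP => /bigcupP [C CC xC]; move: (h2 C CC); rewrite xC.
Qed.

Lemma CstarP C : C \in Cstar = (C \in Ccol) && (Gam <= depth C).
Proof. by rewrite /Defs.Cstar inE. Qed.

Lemma CsharpP C : C \in Csharp = (C \in Ccol) && (depth C < Gam).
Proof. by rewrite /Defs.Csharp inE. Qed.

Lemma PstarP b : reflect (exists2 C, C \in Cstar & b = Fmin C) (b \in Pstar).
Proof. by rewrite /Defs.Pstar; apply: (iffP imsetP). Qed.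

Lemma depthE C : depth C = Hmin (bdry C) - Hmin C.
Proof. by []. Qed.

Lemma bdry_starE C : bdry_star C = Fmin (bdry C).
Proof. by []. Qed.

Hypothesis Hne : forall C, C \in Ccol -> exists z, z \in C.
Hypothesis Hdisj : forall C C' z, C \in Ccol -> C' \in Ccol -> z \in C -> z \in C' -> C = C'.
Hypothesis HOm : forall C z, C \in Ccol -> z \in C -> z \in Om.
Hypothesis Hcyc : forall C u w, C \in Ccol -> u \in C -> w \in bdry C -> H u < H w.
Hypothesis Hconn : forall C z z', C \in Ccol -> z \in C -> z' \in C -> Phi z z' < Hmin (bdry C).
Hypothesis Hbd : forall C, C \in Ccol -> exists w, w \in bdry C.
Hypothesis Hbdle : forall C, C \in Ccol -> Hmin (bdry C) <= Phibar.

Lemma F_inj C C' : C \in Ccol -> C' \in Ccol -> Fmin C = Fmin C' -> C = C'.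
Proof.
move=> CC C'C e; have [z0 z0C] := Hne CC; have [z zF] := Fmin_ex z0C.
apply: (Hdisj (z := z)) => //; first exact: Fmin_sub.
by apply: Fmin_sub; rewrite -e.
Qed.

Lemma F_ne1 C x : C \in Ccol -> x \in Delta -> Fmin C <> [set x].
Proof.
move=> CC /DeltaP [_ h] e; have := set11 x; rewrite -e => /Fmin_sub xC.
by move: (h C CC); rewrite xC.
Qed.

Lemma Delta_notin C x : C \in Ccol -> x \in Delta -> x \notin C.
Proof. by move=> CC /DeltaP [_ h]; exact: h. Qed.

Lemma Delta_Om x : x \in Delta -> x \in Om.
Proof. by case/DeltaP. Qed.

Lemma Hmin_bdry_le C w : w \in bdry C -> Hmin (bdry C) <= H w.
Proof. exact: Hmin_le. Qed.

Lemma Hmin_C_lt C : C \in Ccol -> forall z, z \in C -> H z < Hmin (bdry C).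
Proof.
move=> CC z zC; have [w wb] := Hbd CC; have [w' w'b ->] := Hmin_ex wb.
exact: Hcyc w'b.
Qed.

Lemma bstar_Om C w : C \in Ccol -> w \in bdry_star C -> w \in Om.
Proof.
move=> CC /FminP [/bdryP [_ [u uC wu]] hw].
apply: (Om_adj (x := u)); [exact: HOm uC| by rewrite adj_sym| by rewrite hw; exact: Hbdle].
Qed.

Lemma bstar_Delta C w : C \in Ccol -> w \in bdry_star C -> w \in Delta.
Proof.
move=> CC wb; apply/DeltaP; split; first exact: bstar_Om wb.
move=> C' C'C; apply/negP => wC'.
have /FminP [/bdryP [wC [u uC wu]] _] := wb.
have uC' : u \notin C'.
  by apply/negP => uC'; have eC := Hdisj CC C'C uC uC'; move: wC; rewrite eC wC'.
have uw : adj u w by rewrite adj_sym.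
have h1 := Hcyc CC uC (bdry_adj uC wC uw).
have h2 := Hcyc C'C wC' (bdry_adj wC' uC' wu).
by move: (lt_trans h1 h2); rewrite ltxx.
Qed.


Lemma le_addr_ge0 (x y z : R) : x <= y -> 0 <= z -> x <= y + z.
Proof. by move=> h1 h2; apply: le_trans h1 _; rewrite lerDl. Qed.
Lemma le_addl_ge0 (x y z : R) : x <= y -> 0 <= z -> x <= z + y.
Proof. by move=> h1 h2; apply: le_trans h1 _; rewrite lerDr. Qed.

Lemma sum_ge_term (I : finType) (P : pred I) (F : I -> R) i :
  P i -> (forall j, P j -> 0 <= F j) -> F i <= \sum_(j | P j) F j.
Proof.
move=> Pi h; rewrite (bigD1 i) //= lerDl; apply: sumr_ge0 => j /andP[Pj _]; exact: h.
Qed.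

Lemma sum_gt0_ex (I : finType) (P : pred I) (F : I -> R) :
  0 < \sum_(j | P j) F j -> exists2 j, P j & 0 < F j.
Proof.
move=> h; case: (boolP [exists j, P j && (0 < F j)]) => [/existsP [j /andP [Pj Fj]]|]; first by exists j.
rewrite negb_exists => /forallP hn; move: h; rewrite ltNge => /negP; case.
apply: sumr_le0 => j Pj; move: (hn j); rewrite Pj /= -leNgt; exact.
Qed.

Lemma add3_gt0 (a b c : R) : 0 <= a -> 0 <= b -> 0 <= c -> 0 < a + b + c ->
  [\/ 0 < a, 0 < b | 0 < c].
Proof.
move=> ha hb hc h.
case: (ltrP 0 a) => [?|a0]; first by constructor 1.
case: (ltrP 0 b) => [?|b0]; first by constructor 2.
case: (ltrP 0 c) => [?|c0]; first by constructor 3.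
have := lerD (lerD a0 b0) c0; rewrite !addr0 => /(lt_le_trans h); rewrite ltxx.
by [].
Qed.

Definition jump (a b : {set T}) : Prop :=
  [\/ exists x y, [/\ x \in Delta, y \in Delta, a = [set x], b = [set y] & adj x y /\ H y <= H x],
      exists C x, [/\ C \in Ccol, x \in Delta, a = [set x], b = Fmin C & x \in bdry C]
    | exists C x, [/\ C \in Ccol, x \in Delta, a = Fmin C, b = [set x] & depth C <= Gam /\ x \in bdry_star C]].

Lemma card_adj_gt0 C x : x \in bdry C -> 0 < #|[set z in C | adj x z]|%:R :> R.
Proof.
case/bdryP => _ [y yC xy]; rewrite ltr0n card_gt0; apply/set0Pn; exists y.
by rewrite inE yC xy.
Qed.

Lemma rate_ge0 a b : 0 <= rate a b.
Proof.
rewrite /Defs.rate; apply: addr_ge0; first apply: addr_ge0;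
  apply: sumr_ge0 => ? _; apply: sumr_ge0 => ? _; case: ifP => // _.
by apply: divr_ge0.
Qed.

Lemma rate_gt0P a b : 0 < rate a b <-> jump a b.
Proof.
split.
  rewrite /Defs.rate => h.
  have g : forall (I J : finType) (P : pred I) (Q : pred J) (F : I -> J -> R), (forall i j, 0 <= F i j) ->
     0 <= \sum_(i | P i) \sum_(j | Q j) F i j.
    by move=> I J P Q F hF; apply: sumr_ge0 => i _; apply: sumr_ge0.
  have [] := add3_gt0 _ _ _ h.
  - by apply: g => *; case: ifP.
  - by apply: g => *; case: ifP.
  - by apply: g => *; case: ifP => // _; exact: divr_ge0.
  - case/sum_gt0_ex => x xD /sum_gt0_ex [y yD]; case: ifP; last by rewrite ltxx.
    case/andP=> /andP[/andP[/eqP ea /eqP eb] xy] hyx _; constructor 1.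
    by exists x, y.
  - case/sum_gt0_ex => C CC /sum_gt0_ex [x xD]; case: ifP; last by rewrite ltxx.
    case/andP=> /andP[/eqP ea /eqP eb] xb _; constructor 2.
    by exists C, x.
  - case/sum_gt0_ex => C CC /sum_gt0_ex [x xD]; case: ifP; last by rewrite ltxx.
    case/andP=> /andP[/andP[/eqP ea /eqP eb] hd] xb _; constructor 3.
    by exists C, x.
have S1 : forall a b, 0 <= \sum_(x in Delta) \sum_(y in Delta)
     (if (a == [set x]) && (b == [set y]) && adj x y && (H y <= H x) then 1 else 0 : R).
  by move=> *; apply: sumr_ge0 => ? _; apply: sumr_ge0 => ? _; case: ifP.
have S2 : forall a b, 0 <= \sum_(C in Ccol) \sum_(x in Delta)
       (if (a == [set x]) && (b == Fmin C) && (x \in bdry C)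
        then #|[set z in C | adj x z]|%:R else 0 : R).
  by move=> *; apply: sumr_ge0 => ? _; apply: sumr_ge0 => ? _; case: ifP.
have S3 : forall a b, 0 <= \sum_(C in Ccol) \sum_(x in Delta)
       (if (a == Fmin C) && (b == [set x]) && (depth C <= Gam)
           && (x \in bdry_star C)
        then #|[set z in C | adj x z]|%:R / #|Fmin C|%:R else 0 : R).
  by move=> *; apply: sumr_ge0 => ? _; apply: sumr_ge0 => ? _; case: ifP => // _; exact: divr_ge0.
case=> [[x [y [xD yD -> -> [xy yx]]]]|[C [x [CC xD -> -> xb]]]|[C [x [CC xD -> -> [hd xb]]]]];
  rewrite /Defs.rate.
- apply: (@lt_le_trans _ _ 1); first exact: ltr01.
  apply: le_addr_ge0 (S3 _ _); apply: le_addr_ge0 (S2 _ _).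
  rewrite (bigD1 x) //=; apply: le_addr_ge0; last by apply: sumr_ge0 => ? _; apply: sumr_ge0 => ? _; case: ifP.
  rewrite (bigD1 y) //=; apply: le_addr_ge0; last by apply: sumr_ge0 => ? _; case: ifP.
  by rewrite !eqxx xy yx.
- apply: lt_le_trans (card_adj_gt0 xb) _.
  apply: le_addr_ge0 (S3 _ _); apply: le_addl_ge0 (S1 _ _).
  rewrite (bigD1 C) //=; apply: le_addr_ge0; last by apply: sumr_ge0 => ? _; apply: sumr_ge0 => ? _; case: ifP.
  rewrite (bigD1 x) //=; apply: le_addr_ge0; last by apply: sumr_ge0 => ? _; case: ifP.
  by rewrite !eqxx xb.
- have [z0 z0C] := Hne CC; have [z zF] := Fmin_ex z0C.
  have cF : 0 < #|Fmin C|%:R :> R by rewrite ltr0n card_gt0; apply/set0Pn; exists z.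
  have xb' : x \in bdry C by move/FminP: xb => [].
  apply: lt_le_trans (divr_gt0 (card_adj_gt0 xb') cF) _.
  apply: le_addl_ge0; last by apply: addr_ge0.
  rewrite (bigD1 C) //=; apply: le_addr_ge0; last by
    apply: sumr_ge0 => ? _; apply: sumr_ge0 => ? _; case: ifP => // _; exact: divr_ge0.
  rewrite (bigD1 x) //=; apply: le_addr_ge0; last by apply: sumr_ge0 => ? _; case: ifP => // _; exact: divr_ge0.
  by rewrite !eqxx hd xb.
Qed.

Definition Jr : rel {set T} := fun s s' => 0 < rate s s'.

Lemma total_ge0 x : 0 <= total_rate x.
Proof. by apply: sumr_ge0 => y _; exact: rate_ge0. Qed.

Lemma total_gt0 x y : Jr x y -> 0 < total_rate x.
Proof.
move=> h; apply: lt_le_trans h _; rewrite /Defs.total_rate (bigD1 y) //=.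
by apply: le_addr_ge0 => //; apply: sumr_ge0 => ? _; exact: rate_ge0.
Qed.

Section Hit.
Variables (a : {set T}) (B : {set {set T}}).

Lemma hitn_ge0 n x : 0 <= hitn n a B x.
Proof.
elim: n x => [|n IH] x /=; first by case: ifP.
case: ifP => // _; case: ifP => // _; case: ifP => // _.
apply: sumr_ge0 => y _; apply: mulr_ge0 => //; apply: divr_ge0; [exact: rate_ge0|exact: total_ge0].
Qed.

Lemma hitn_le1 n x : hitn n a B x <= 1.
Proof.
elim: n x => [|n IH] x /=; first by case: ifP.
case: ifP => // _; case: ifP => // _; case: ifP => // /negbT t0.
apply: (@le_trans _ _ (\sum_(y : {set T}) rate x y / total_rate x)).
  apply: ler_sum => y _; apply: ler_piMr => //; apply: divr_ge0; [exact: rate_ge0|exact: total_ge0].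
by rewrite -mulr_suml divff.
Qed.

Lemma hitn_mono n x : hitn n a B x <= hitn n.+1 a B x.
Proof.
elim: n x => [|n IH] x.
  rewrite [hitn 0 _ _ _]/=; case: ifP => [/eqP->|_]; first by rewrite /= eqxx.
  exact: hitn_ge0.
rewrite [hitn n.+1 _ _ _]/= [hitn n.+2 _ _ _]/=.
case: ifP => // _; case: ifP => // _; case: ifP => // _.
apply: ler_sum => y _; apply: ler_wpM2l => //.
apply: divr_ge0; [exact: rate_ge0|exact: total_ge0].
Qed.

Lemma hitprob_ge n x : hitn n a B x <= hitprob a B x.
Proof.
rewrite /Defs.hitprob; apply: nondecreasing_cvgn_le.
  by apply: homo_leq => //; [exact: le_trans|move=> i; exact: hitn_mono].
apply: nondecreasing_is_cvgn.
  by apply: homo_leq => //; [exact: le_trans|move=> i; exact: hitn_mono].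
by exists 1 => _ [m _ <-]; exact: hitn_le1.
Qed.

Lemma hitprob_ge0 x : 0 <= hitprob a B x.
Proof. exact: le_trans (hitn_ge0 0 x) (hitprob_ge 0 x). Qed.

Lemma hitprob_pos x : 0 < hitprob a B x -> exists n, 0 < hitn n a B x.
Proof.
move=> h; have [//|hn] := pselect (exists n, 0 < hitn n a B x).
have e : (fun n => hitn n a B x) = (fun=> 0).
  apply: funext => n; apply/eqP; rewrite eq_le hitn_ge0 andbT leNgt; apply/negP => hp.
  by apply: hn; exists n.
have h0 : hitprob a B x = 0 by rewrite /Defs.hitprob e; exact: lim_cst.
by move: h; rewrite h0 ltxx.
Qed.

Lemma hitn_conn n x : 0 < hitn n a B x -> connect Jr x a.
Proof.
elim: n x => [|n IH] x /=; first by case: ifP => [/eqP-> _|_]; [exact: connect0|rewrite ltxx].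
case: ifP => [/eqP-> _|_]; first exact: connect0.
case: ifP => [_|_]; first by rewrite ltxx.
case: ifP => [_|_]; first by rewrite ltxx.
case/sum_gt0_ex => y _ hy.
have hr : 0 < rate x y.
  rewrite lt_neqAle rate_ge0 andbT; apply/negP => /eqP r0; move: hy; rewrite -r0 mul0r mul0r ltxx //.
have hh : 0 < hitn n a B y.
  rewrite lt_neqAle hitn_ge0 andbT; apply/negP => /eqP h0; move: hy; rewrite -h0 mulr0 ltxx //.
by apply: connect_trans (connect1 (_ : Jr x y)) (IH y hh).
Qed.

End Hit.

Lemma Cstar_Ccol C : C \in Cstar -> C \in Ccol.
Proof. by rewrite CstarP => /andP[]. Qed.

Lemma single_notP x : x \in Delta -> [set x] \notin Pstar.
Proof.
move=> xD; apply/negP => /PstarP [C CS e].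
exact: (F_ne1 (Cstar_Ccol CS) xD (esym e)).
Qed.

Lemma J_from_P s s' : s \in Pstar -> Jr s s' -> exists2 x, x \in Delta & s' = [set x].
Proof.
move=> /PstarP [C CS ->] /rate_gt0P.
case=> [[x [y [xD _ e _ _]]]|[C' [x [_ xD e _ _]]]|[C' [x [_ xD _ -> _]]]]; last by exists x.
- by case: (F_ne1 (Cstar_Ccol CS) xD e).
- by case: (F_ne1 (Cstar_Ccol CS) xD e).
Qed.

Lemma hitn_self k b B : hitn k b B b = 1.
Proof. by case: k => [|k] /=; rewrite eqxx. Qed.

Lemma trace_pos a b x : x \in Delta -> Jr a [set x] -> 0 < hitprob b Pstar [set x] ->
  0 < trace_rate a b.
Proof.
move=> xD hr hp; rewrite /Defs.trace_rate.
apply: lt_le_trans (mulr_gt0 hr hp) _; rewrite (bigD1 x) //=.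
apply: le_addr_ge0 => //; apply: sumr_ge0 => y _; apply: mulr_ge0; [exact: rate_ge0|exact: hitprob_ge0].
Qed.

Lemma hit_forward b : b \in Pstar -> forall p s, path Jr s p -> last s p = b ->
  (s \in Pstar -> reach s b) /\
  (s \notin Pstar -> exists b', [/\ b' \in Pstar, 0 < hitn (size p) b' Pstar s & reach b' b]).
Proof.
move=> bP; elim=> [|s1 p IH] s /=.
  by move=> _ ->; split => [_|]; [exact: connect0|rewrite bP].
case/andP=> ss1 ps1 ls; have [IH1 IH2] := IH s1 ps1 ls.
have tot : 0 < total_rate s := total_gt0 ss1.
have sumpos : forall b' k, b' \in Pstar -> s \notin Pstar -> 0 < hitn k b' Pstar s1 ->
    0 < hitn k.+1 b' Pstar s.
  move=> b' k b'P sP hk /=.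
  have -> : (s == b') = false by apply/negP => /eqP e; move: sP; rewrite e b'P.
  rewrite (negbTE sP) gt_eqF //.
  apply: (@lt_le_trans _ _ (rate s s1 / total_rate s * hitn k b' Pstar s1)).
    exact: mulr_gt0 (divr_gt0 ss1 tot) hk.
  rewrite (bigD1 s1) //=; apply: le_addr_ge0 => //; apply: sumr_ge0 => j _.
  by apply: mulr_ge0; [apply: divr_ge0; [exact: rate_ge0|exact: total_ge0]|exact: hitn_ge0].
split.
  move=> sP; have [x xD e] := J_from_P sP ss1.
  have s1P : s1 \notin Pstar by rewrite e; exact: single_notP.
  have [b' [b'P hb' rb']] := IH2 s1P.
  have tr : 0 < trace_rate s b'.
    by apply: (trace_pos xD); [rewrite -e|rewrite -e; exact: lt_le_trans hb' (hitprob_ge _ _ _ _)].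
  case: (eqVneq s b') => [->|ne]; first exact: rb'.
  apply: connect_trans rb'; apply: connect1; rewrite /Defs.trace_edge sP b'P ne /=; exact: tr.
move=> sP; case: (boolP (s1 \in Pstar)) => s1P.
  exists s1; split => //; last exact: IH1.
  by apply: sumpos => //; rewrite hitn_self ltr01.
have [b' [b'P hb' rb']] := IH2 s1P.
by exists b'; split => //; exact: sumpos.
Qed.

Lemma reach_of_conn a b : a \in Pstar -> connect Jr a b -> b \in Pstar -> reach a b.
Proof.
move=> aP /connectP [p pp lp] bP.
by have [h _] := hit_forward bP pp (esym lp); exact: h.
Qed.

Lemma conn_of_reach a b : reach a b -> connect Jr a b.
Proof.
move=> /connectP [p pp ->]; elim: p a pp => [|c p IH] a /=; first by move=> _; exact: connect0.
case/andP=> /and4P [aP cP _ tr] pc; apply: connect_trans (IH c pc).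
have [x xD hx] := sum_gt0_ex tr.
have hr : 0 < rate a [set x].
  rewrite lt_neqAle rate_ge0 andbT; apply/negP => /eqP r0; move: hx; rewrite -r0 mul0r ltxx //.
have hp : 0 < hitprob c Pstar [set x].
  rewrite lt_neqAle hitprob_ge0 andbT; apply/negP => /eqP h0; move: hx; rewrite -h0 mulr0 ltxx //.
have [n hn] := hitprob_pos hp.
apply: connect_trans (connect1 (_ : Jr a [set x])) (hitn_conn hn); exact: hr.
Qed.

Lemma reach_refl a : reach a a.
Proof. exact: connect0. Qed.

Lemma rec_back r b : recurrent r -> b \in Pstar -> reach r b -> reach b r.
Proof. by case/andP=> _ /forallP /(_ b) /implyP h bP /(implyP (h bP)). Qed.

Lemma rec_P r : recurrent r -> r \in Pstar.
Proof. by case/andP. Qed.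

Lemma comm_classP r b : b \in comm_class r = [&& b \in Pstar, reach r b & reach b r].
Proof. by rewrite /Defs.comm_class inE. Qed.

Lemma closed_classesP K : reflect (exists2 r, recurrent r & K = comm_class r) (K \in closed_classes).
Proof.
rewrite /Defs.closed_classes; apply: (iffP imsetP) => -[r].
  by rewrite inE => /andP[_ rr] ->; exists r.
by move=> rr ->; exists r => //; rewrite inE rr rec_P.
Qed.

Lemma class_self r : recurrent r -> r \in comm_class r.
Proof. by move=> rr; rewrite comm_classP rec_P //= reach_refl. Qed.

Lemma class_closed r b c : recurrent r -> b \in comm_class r -> c \in Pstar -> reach b c ->
  c \in comm_class r.
Proof.
move=> rr; rewrite !comm_classP => /and3P [_ rb br] cP bc.
have rc : reach r c := connect_trans rb bc.
by rewrite cP /=; apply/andP; split => //; exact: rec_back rr cP rc.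
Qed.

Lemma class_eq r r' b : recurrent r -> recurrent r' -> b \in comm_class r -> b \in comm_class r' ->
  comm_class r = comm_class r'.
Proof.
move=> rr rr'; rewrite !comm_classP => /and3P [bP rb br] /and3P [_ r'b br'].
apply/setP => c; rewrite !comm_classP; case cP: (c \in Pstar) => //=.
apply/andP/andP => -[h1 h2]; split.
- exact: connect_trans r'b (connect_trans br h1).
- exact: connect_trans h2 (connect_trans rb br').
- exact: connect_trans rb (connect_trans br' h1).
- exact: connect_trans h2 (connect_trans r'b br).
Qed.

Lemma rec_ex a : a \in Pstar -> exists2 r, recurrent r & reach a r.
Proof.
move=> aP.
pose f b := #|[set c | reach b c]|.
have Pa : (a \in Pstar) && reach a a by rewrite aP reach_refl.
case: (@arg_minnP _ a (fun b => (b \in Pstar) && reach a b) f Pa) => r /andP[rP ar] hmin.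
exists r => //; rewrite /Defs.recurrent rP /=; apply/forallP => c; apply/implyP => cP; apply/implyP => rc.
have sub : [set d | reach c d] \subset [set d | reach r d].
  by apply/subsetP => d; rewrite !inE; exact: connect_trans rc.
have ge : (f r <= f c)%N by apply: hmin; rewrite cP; exact: connect_trans ar rc.
rewrite /f in ge.
have eqc : #|[set d | reach c d]| == #|[set d | reach r d]| by rewrite eqn_leq (subset_leq_card sub) ge.
have sub2 : [set d | reach r d] \subset [set d | reach c d].
  by have [_ <-] := subset_leqif_card sub.
by move/subsetP: sub2 => /(_ r); rewrite !inE reach_refl; apply.
Qed.

Definition regC (s : {set T}) := [pick C in Ccol | Fmin C == s].
Definition lev (s : {set T}) : R :=
  match regC s with Some C => Hmin (bdry C)
  | None => match [pick x | s == [set x]] with Some x => H x | None => 0 end end.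
Definition inreg (s : {set T}) (z : T) : bool :=
  match regC s with Some C => z \in C | None => s == [set z] end.
Definition isState (s : {set T}) : Prop :=
  (exists2 x, x \in Delta & s = [set x]) \/ (exists2 C, C \in Ccol & s = Fmin C).

Lemma regC_F C : C \in Ccol -> regC (Fmin C) = Some C.
Proof.
move=> CC; rewrite /regC; case: pickP => [C' /andP[C'C /eqP e]|/(_ C)].
  by rewrite (F_inj C'C CC e).
by rewrite CC eqxx.
Qed.

Lemma regC_1 x : x \in Delta -> regC [set x] = None.
Proof.
move=> xD; rewrite /regC; case: pickP => [C /andP[CC /eqP e]|//].
by case: (F_ne1 CC xD e).
Qed.

Lemma lev_F C : C \in Ccol -> lev (Fmin C) = Hmin (bdry C).
Proof. by move=> CC; rewrite /lev regC_F. Qed.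

Lemma lev_1 x : x \in Delta -> lev [set x] = H x.
Proof.
move=> xD; rewrite /lev regC_1 //; case: pickP => [y /eqP /set1_inj -> //|/(_ x)].
by rewrite eqxx.
Qed.

Lemma inreg_F C z : C \in Ccol -> inreg (Fmin C) z = (z \in C).
Proof. by move=> CC; rewrite /inreg regC_F. Qed.

Lemma inreg_1 x z : x \in Delta -> inreg [set x] z = (z == x).
Proof.
move=> xD; rewrite /inreg regC_1 //; apply/eqP/eqP => [/set1_inj -> //|->] //.
Qed.

Lemma J_cases s s' : Jr s s' -> jump s s'.
Proof. by move/rate_gt0P. Qed.

Lemma J_state s s' : Jr s s' -> isState s /\ isState s'.
Proof.
move/J_cases => [[x [y [xD yD -> -> _]]]|[C [x [CC xD -> -> _]]]|[C [x [CC xD -> -> _]]]].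
- by split; left; [exists x|exists y].
- by split; [left; exists x|right; exists C].
- by split; [right; exists C|left; exists x].
Qed.

Lemma J_lev s s' : Jr s s' -> lev s' <= lev s.
Proof.
move/J_cases => [[x [y [xD yD -> -> [_ yx]]]]|[C [x [CC xD -> -> xb]]]|[C [x [CC xD -> -> [_ xb]]]]].
- by rewrite !lev_1.
- by rewrite lev_F // lev_1 //; exact: Hmin_le.
- by rewrite lev_F // lev_1 //; case/FminP: xb => _ ->.
Qed.

Lemma J_reg s s' z z' : Jr s s' -> inreg s z -> inreg s' z' -> Phi z z' <= lev s.
Proof.
move/J_cases => [[x [y [xD yD -> -> [xy yx]]]]|[C [x [CC xD -> -> xb]]]|[C [x [CC xD -> -> [_ xb]]]]].
- rewrite !inreg_1 // lev_1 // => /eqP-> /eqP->.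
  by apply: le_trans (Phi_adj xy) _; apply: nmax_lub.
- rewrite inreg_1 // inreg_F // lev_1 // => /eqP-> z'C.
  have [_ [y0 y0C xy0]] := bdryP _ _ xb.
  have h0 : H y0 <= H x by apply: ltW; apply: lt_le_trans (Hmin_C_lt CC y0C) (Hmin_le xb).
  apply: Phi_trans_le.
    by apply: le_trans (Phi_adj xy0) _; apply: nmax_lub.
  by apply: ltW; apply: lt_le_trans (Hconn CC y0C z'C) (Hmin_le xb).
- rewrite inreg_F // inreg_1 // lev_F // => zC /eqP->.
  have /FminP [xb' hx] := xb; have [_ [u uC xu]] := bdryP _ _ xb'.
  apply: Phi_trans_le; first exact: ltW (Hconn CC zC uC).
  apply: le_trans (Phi_adj (_ : adj u x)) _; first by rewrite adj_sym.
  by rewrite -hx; apply: nmax_lub => //; apply: ltW; exact: Hcyc CC uC xb'.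
Qed.

Lemma reg_ex s : isState s -> exists z, inreg s z.
Proof.
case=> [[x xD ->]|[C CC ->]]; first by exists x; rewrite inreg_1.
by have [z zC] := Hne CC; exists z; rewrite inreg_F.
Qed.

Lemma reg_H s z : isState s -> inreg s z -> H z <= lev s.
Proof.
case=> [[x xD ->]|[C CC ->]]; first by rewrite inreg_1 // lev_1 // => /eqP->.
by rewrite inreg_F // lev_F // => zC; apply: ltW; exact: Hmin_C_lt.
Qed.

Lemma reg_Om s z : isState s -> inreg s z -> z \in Om.
Proof.
case=> [[x xD ->]|[C CC ->]]; first by rewrite inreg_1 // => /eqP->; exact: Delta_Om.
by rewrite inreg_F // => zC; exact: HOm zC.
Qed.

Lemma reg_same s z z' : isState s -> inreg s z -> inreg s z' -> Phi z z' <= lev s.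
Proof.
case=> [[x xD ->]|[C CC ->]].
  by rewrite !inreg_1 // lev_1 // => /eqP-> /eqP->; rewrite Phi_refl.
by rewrite !inreg_F // lev_F // => zC z'C; apply: ltW; exact: Hconn.
Qed.

Lemma conn_lev s s' : connect Jr s s' -> lev s' <= lev s.
Proof.
move/connectP => [p pp ->]; elim: p s pp => //= c p IH s /andP[sc pc].
exact: le_trans (IH c pc) (J_lev sc).
Qed.

Lemma conn_state s s' : connect Jr s s' -> isState s -> isState s'.
Proof.
move/connectP => [p pp ->]; elim: p s pp => //= c p IH s /andP[sc pc] _.
by apply: IH pc _; case: (J_state sc).
Qed.

Lemma conn_reg s s' z z' : connect Jr s s' -> isState s -> inreg s z -> inreg s' z' ->
  Phi z z' <= lev s.
Proof.
move/connectP => [p pp ->]; elim: p s z pp => /= [|c p IH] s z.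
  by move=> _ st; exact: reg_same.
case/andP=> sc pc st zs z'l.
have [_ stc] := J_state sc; have [z1 z1c] := reg_ex stc.
apply: Phi_trans_le; first exact: J_reg sc zs z1c.
exact: le_trans (IH c z1 pc stc z1c z'l) (J_lev sc).
Qed.

Lemma notDelta w : w \in Om -> w \notin Delta -> exists2 C, C \in Ccol & w \in C.
Proof.
move=> wO wD; have [//|hn] := pselect (exists2 C, C \in Ccol & w \in C).
case/negP: wD; apply/DeltaP; split => // C CC; apply/negP => wC; apply: hn; by exists C.
Qed.

Lemma inreg_cases s z : isState s -> inreg s z ->
  (s = [set z] /\ z \in Delta) \/ (exists C, [/\ C \in Ccol, s = Fmin C & z \in C]).
Proof.
case=> [[x xD ->]|[C CC ->]]; first by rewrite inreg_1 // => /eqP->; left.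
by rewrite inreg_F // => zC; right; exists C.
Qed.

Lemma step_lemma s u w : isState s -> inreg s u -> adj u w -> H w <= lev s ->
  (forall C, C \in Ccol -> s = Fmin C -> w \notin C -> depth C <= Gam) ->
  exists2 s', connect Jr s s' & inreg s' w.
Proof.
move=> st us uw hw hd; case: (inreg_cases st us) => [[e uD]|[C [CC e uC]]]; subst s.
  rewrite lev_1 // in hw.
  have wO : w \in Om by apply: (Om_adj (Delta_Om uD) uw); exact: le_trans hw (Om_le (Delta_Om uD)).
  case: (boolP (w \in Delta)) => wD.
    exists [set w]; last by rewrite inreg_1.
    by apply: connect1; apply/rate_gt0P; constructor 1; exists u, w.
  have [C CC wC] := notDelta wO wD.
  exists (Fmin C); last by rewrite inreg_F.
  apply: connect1; apply/rate_gt0P; constructor 2; exists C, u; split => //.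
  apply: (bdry_adj wC) (Delta_notin CC uD) _; by rewrite adj_sym.
case: (boolP (w \in C)) => wC; first by exists (Fmin C); [exact: connect0|rewrite inreg_F].
have wb : w \in bdry C := bdry_adj uC wC uw.
rewrite lev_F // in hw.
have ws : w \in bdry_star C.
  by apply/FminP; split => //; apply/eqP; rewrite eq_le hw Hmin_le.
exists [set w]; last by rewrite inreg_1 //; exact: bstar_Delta ws.
apply: connect1; apply/rate_gt0P; constructor 3; exists C, w; split => //.
- exact: bstar_Delta ws.
- by split => //; exact: hd.
Qed.

Definition NTprop := forall s, isState s -> exists2 b, b \in Pstar & connect Jr s b.

Local Notation Eprop := (EpropG Pf Co).

Lemma depth_notstar C : C \in Ccol -> C \notin Cstar -> depth C < Gam.
Proof. by move=> CC; rewrite CstarP CC /= -ltNge. Qed.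

Lemma F_Pstar C : C \in Ccol -> Fmin C \in Pstar -> C \in Cstar.
Proof. by move=> CC /PstarP [C' C'S e]; rewrite (F_inj CC (Cstar_Ccol C'S) e). Qed.

Lemma NT_of_E : Eprop -> NTprop.
Proof.
move=> E s st; have [//|hn] := pselect (exists2 b, b \in Pstar & connect Jr s b).
have [s0 s0r hs0] := @minOver_ex _ _ (connect Jr s) lev (ex_intro _ s (connect0 _ s)).
have {}s0r : connect Jr s s0 by [].
set L := minOver _ _ in hs0.
have minL : forall s', connect Jr s s' -> L <= lev s' by move=> s' h; exact: minOver_le.
have st0 := conn_state s0r st.
pose U := [set z | [exists s', connect Jr s0 s' && inreg s' z]].
have UP : forall z, reflect (exists2 s', connect Jr s0 s' & inreg s' z) (z \in U).
  move=> z; rewrite /U inE; apply: (iffP existsP).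
    by case=> s' /andP[h1 h2]; exists s'.
  by case=> s' h1 h2; exists s'; rewrite h1.
have levE : forall s', connect Jr s0 s' -> lev s' = L.
  move=> s' h; apply/eqP; rewrite eq_le hs0 conn_lev //=; rewrite -hs0; apply: minL.
  exact: connect_trans s0r h.
have stE : forall s', connect Jr s0 s' -> isState s' by move=> s' h; exact: conn_state h st0.
have noP : forall s', connect Jr s0 s' -> s' \notin Pstar.
  move=> s' h; apply/negP => s'P; apply: hn; exists s' => //; exact: connect_trans s0r h.
exfalso; apply: (E U L).
- by have [z zr] := reg_ex st0; exists z; apply/UP; exists s0 => //; exact: connect0.
- by move=> z /UP [s' h1 h2]; exact: reg_Om (stE _ h1) h2.
- by move=> z /UP [s' h1 h2]; rewrite -(levE _ h1); exact: reg_H (stE _ h1) h2.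
- move=> w /bdryP [wU [u uU wu]]; rewrite ltNge; apply/negP => hw.
  have [s' h1 h2] := UP u uU.
  have uw : adj u w by rewrite adj_sym.
  have hw' : H w <= lev s' by rewrite (levE _ h1).
  have hd : forall C, C \in Ccol -> s' = Fmin C -> w \notin C -> depth C <= Gam.
    move=> C CC e _; apply: ltW; apply: depth_notstar CC _; apply/negP => CS.
    by move: (noP _ h1); rewrite e; move/negP; apply; apply/PstarP; exists C.
  have [s'' h3 h4] := step_lemma (stE _ h1) h2 uw hw' hd.
  by case/negP: wU; apply/UP; exists s'' => //; exact: connect_trans h1 h3.
- move=> C CC [z zC /UP [s' h1 h2]].
  case: (inreg_cases (stE _ h1) h2) => [[_ zD]|[C' [C'C e zC']]].
    by move: (Delta_notin CC zD); rewrite zC.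
  have eC := Hdisj CC C'C zC zC'; subst C'.
  split.
  + apply/subsetP => z' z'C; apply/UP; exists s' => //; by rewrite e inreg_F.
  + apply: depth_notstar CC _; apply/negP => CS.
    by move: (noP _ h1); rewrite e; move/negP; apply; apply/PstarP; exists C.
  + by rewrite -(levE _ h1) e lev_F.
Qed.

Lemma main_gap (NT : NTprop) r a C0 C1 x y :
  recurrent r ->
  (forall C, C \in Cstar -> Fmin C \in comm_class r -> a <= Hmin C) ->
  C0 \in Cstar -> Fmin C0 \in comm_class r -> x \in C0 ->
  C1 \in Cstar -> Fmin C1 \notin comm_class r -> y \in C1 ->
  a + Gam < Phi x y.
Proof.
move=> rr ha C0S C0K xC0 C1S C1K yC1.
rewrite ltNge; apply/negP => hle.
have C0C := Cstar_Ccol C0S; have C1C := Cstar_Ccol C1S.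
have st0 : isState (Fmin C0) by right; exists C0.
have inK : forall b, connect Jr (Fmin C0) b -> b \in Pstar -> b \in comm_class r.
  have C0P : Fmin C0 \in Pstar by apply/PstarP; exists C0.
  move=> b h bP; exact: (class_closed rr C0K bP (reach_of_conn C0P h bP)).
have levP : forall C, C \in Cstar -> Fmin C \in comm_class r -> a + Gam <= Hmin (bdry C).
  move=> C CS CK; have := ha C CS CK; rewrite CstarP in CS; case/andP: CS => _ hd h.
  rewrite depthE in hd; rewrite -(subrK (Hmin C) (Hmin (bdry C))) addrC lerD //.
have levc : forall s, connect Jr (Fmin C0) s -> a + Gam <= lev s.
  move=> s h; have [b bP hb] := NT _ (conn_state h st0).
  have bK := inK b (connect_trans h hb) bP.
  have [C CS eb] := PstarP _ bP; subst b.
  by apply: le_trans (levP C CS bK) _; rewrite -(lev_F (Cstar_Ccol CS)); exact: conn_lev hb.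
pose A := [pred z | [exists s, connect Jr (Fmin C0) s && inreg s z]].
have AP : forall z, reflect (exists2 s, connect Jr (Fmin C0) s & inreg s z) (z \in A).
  move=> z; rewrite inE; apply: (iffP existsP).
    by case=> s /andP[h1 h2]; exists s.
  by case=> s h1 h2; exists s; rewrite h1.
have xA : x \in A by apply/AP; exists (Fmin C0); [exact: connect0|rewrite inreg_F].
have yA : y \in A.
  apply: (Phi_closure hle xA) => u w /AP [s h1 h2] uw hw.
  have st := conn_state h1 st0.
  have hw' : H w <= lev s := le_trans hw (levc s h1).
  have hd : forall C, C \in Ccol -> s = Fmin C -> w \notin C -> depth C <= Gam.
    move=> C CC e wC; case: (boolP (C \in Cstar)) => CS; last exact: ltW (depth_notstar CC CS).
    have CK : Fmin C \in comm_class r by apply: inK; [rewrite -e|apply/PstarP; exists C].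
    have haC := ha C CS CK.
    have uC : u \in C by move: h2; rewrite e inreg_F.
    have wb : w \in bdry C := bdry_adj uC wC uw.
    have hb := le_trans (Hmin_le wb) hw.
    by rewrite depthE lerBlDr; apply: le_trans hb _; rewrite addrC lerD2l.
  have [s' h3 h4] := step_lemma st h2 uw hw' hd.
  by apply/AP; exists s' => //; exact: connect_trans h1 h3.
have [s h1 h2] := AP y yA.
case: (inreg_cases (conn_state h1 st0) h2) => [[_ yD]|[C [CC e yC]]].
  by move: (Delta_notin C1C yD); rewrite yC1.
have eC := Hdisj CC C1C yC yC1; subst C s.
have C1P : Fmin C1 \in Pstar by apply/PstarP; exists C1.
by move: C1K; rewrite (inK _ h1 C1P).
Qed.

Hypothesis HE : EpropG Pf Co.
Hypothesis HPl : PlG Pf Co.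
Hypothesis HG : 0 < Gam.

Local Notation Pf' := (next_Pfam adj H Pf Co).
Local Notation Co' := (next_Cold adj H Pf Co).
Local Notation Ccol' := (Defs.Ccol adj H Pf' Co').
Local Notation V' := (Vset adj H Pf').
Local Notation Gam' := (Gstar_lvl adj H Pf').
Local Notation UK K := (\bigcup_(Q in K) Q).

Lemma NTh : NTprop. Proof. exact: NT_of_E HE. Qed.

Lemma UKP (K : {set {set T}}) z : reflect (exists2 b, b \in K & z \in b) (z \in UK K).
Proof. exact: bigcupP. Qed.

Lemma class_memP K b : K \in closed_classes -> b \in K -> exists2 C, C \in Cstar & b = Fmin C.
Proof.
case/closed_classesP => r rr -> ; rewrite comm_classP => /and3P [bP _ _]; exact/PstarP.
Qed.

Lemma memUK K z : K \in closed_classes -> z \in UK K ->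
  exists C, [/\ C \in Cstar, Fmin C \in K & z \in Fmin C].
Proof.
move=> KC /UKP [b bK zb]; have [C CS e] := class_memP KC bK; subst b.
by exists C.
Qed.

Lemma UK_ne K : K \in closed_classes -> exists z, z \in UK K.
Proof.
move=> KC; have [r rr eK] := closed_classesP _ KC.
have [C CS er] := PstarP _ (rec_P rr).
have [z0 z0C] := Hne (Cstar_Ccol CS); have [z zF] := Fmin_ex z0C.
by exists z; apply/UKP; exists r; [rewrite eK; exact: class_self|rewrite er].
Qed.

Lemma UK_disj K K' z : K \in closed_classes -> K' \in closed_classes ->
  z \in UK K -> z \in UK K' -> K = K'.
Proof.
move=> KC K'C zK zK'.
have [C [CS CK zC]] := memUK KC zK; have [C' [C'S C'K zC']] := memUK K'C zK'.
have eC := Hdisj (Cstar_Ccol CS) (Cstar_Ccol C'S) (Fmin_sub zC) (Fmin_sub zC'); subst C'.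
have [r rr eK] := closed_classesP _ KC; have [r' rr' eK'] := closed_classesP _ K'C.
have h1 : Fmin C \in comm_class r by rewrite -eK.
have h2 : Fmin C \in comm_class r' by rewrite -eK'.
by rewrite eK eK'; exact: class_eq rr rr' h1 h2.
Qed.

Lemma Pf'P P' : reflect (exists2 K, K \in closed_classes & P' = UK K) (P' \in Pf').
Proof. by rewrite /next_Pfam; apply: (iffP imsetP). Qed.

Lemma Pf'_ne P' : P' \in Pf' -> exists z, z \in P'.
Proof. by case/Pf'P => K KC ->; exact: UK_ne. Qed.

Lemma Pf'_Om P' z : P' \in Pf' -> z \in P' -> z \in Om.
Proof.
case/Pf'P => K KC -> /(memUK KC) [C [CS _ zC]].
exact: HOm (Cstar_Ccol CS) (Fmin_sub zC).
Qed.

Hypothesis Hnu : (1 < nu_lvl adj H Pf Co)%N.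

Lemma Pf'_2 : (1 < #|Pf'|)%N.
Proof.
rewrite /next_Pfam card_in_imset; first exact: Hnu.
move=> K K' KC K'C e; have [z zK] := UK_ne KC.
have zK' : z \in UK K' by rewrite -e.
exact: UK_disj KC K'C zK zK'.
Qed.

Lemma breve'P K y : K \in closed_classes -> y \in breve Pf' (UK K) ->
  exists K', [/\ K' \in closed_classes, K' != K & y \in UK K'].
Proof.
move=> KC /breveP [Q /andP[/Pf'P [K' K'C ->] ne] yQ]; exists K'; split => //.
by apply: contraNneq ne => ->.
Qed.

Lemma breve'_notK K y : K \in closed_classes -> y \in breve Pf' (UK K) ->
  exists C1, [/\ C1 \in Cstar, Fmin C1 \notin K & y \in C1].
Proof.
move=> KC yb; have [K' [K'C ne yK']] := breve'P KC yb.
have [C [CS CK' yC]] := memUK K'C yK'.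
exists C; split => //; last exact: Fmin_sub.
apply/negP => CK; case/negP: ne; apply/eqP; apply: (UK_disj K'C KC (z := y)) => //.
by apply/UKP; exists (Fmin C).
Qed.

Lemma gap K x y : K \in closed_classes -> x \in UK K -> y \in breve Pf' (UK K) ->
  Hmin (UK K) + Gam < Phi x y.
Proof.
move=> KC xK yb; have [r rr eK] := closed_classesP _ KC.
have [C0 [C0S C0K xC0]] := memUK KC xK.
have [C1 [C1S C1K yC1]] := breve'_notK KC yb.
apply: (main_gap NTh rr _ C0S _ (Fmin_sub xC0) C1S _ yC1); rewrite -?eK //.
move=> C CS CK; have [z0 z0C] := Hne (Cstar_Ccol CS); have [z zF] := Fmin_ex z0C.
have /FminP [_ <-] := zF; apply: Hmin_le; apply/UKP; exists (Fmin C) => //; by rewrite eK.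
Qed.

Lemma cP'_gt K : K \in closed_classes -> Hmin (UK K) + Gam < PhiS (UK K) (breve Pf' (UK K)).
Proof.
move=> KC; have [x xK] := UK_ne KC.
have [y yb] : exists y, y \in breve Pf' (UK K).
  have [Q1 [Q2 [Q1P Q2P ne]]] := card_gt1P Pf'_2.
  have [Q QP QnP] : exists2 Q, Q \in Pf' & Q != UK K.
    case: (eqVneq Q1 (UK K)) => [e|]; last by exists Q1.
    by exists Q2 => //; rewrite -e eq_sym.
  have [y yQ] := Pf'_ne QP; exists y; apply/breveP; exists Q => //; by rewrite QP QnP.
apply: (PhiS_gt xK yb) => a b aK bb; exact: gap.
Qed.

Lemma GammaP'_gt P' : P' \in Pf' -> Gam < GammaP adj H Pf' P'.
Proof.
case/Pf'P => K KC ->; rewrite /GammaP -(ltrD2r (Hmin (UK K))) subrK [Gam + _]addrC; exact: cP'_gt.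
Qed.

Lemma Gam_lt : Gam < Gam'.
Proof.
have [Q1 [Q2 [Q1P _ _]]] := card_gt1P Pf'_2.
by apply: minOver_gt; [exists Q1|move=> Q QP; exact: GammaP'_gt].
Qed.

Lemma class_conn K C C' : K \in closed_classes -> Fmin C \in K -> Fmin C' \in K ->
  connect Jr (Fmin C) (Fmin C').
Proof.
case/closed_classesP => r rr -> h1 h2; apply: conn_of_reach.
have := h1; rewrite comm_classP => /and3P [_ _ c1r].
have := h2; rewrite comm_classP => /and3P [_ rc2 _].
exact: connect_trans c1r rc2.
Qed.

Lemma firstjump K C C' : K \in closed_classes -> C \in Cstar -> C' \in Cstar ->
  Fmin C \in K -> Fmin C' \in K -> C != C' -> depth C <= Gam.
Proof.
move=> KC CS C'S CK C'K ne.
have /connectP [p pp lp] := class_conn KC CK C'K.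
case: p pp lp => [_ /= e|s1 p /= /andP[h _] _].
  by case/eqP: ne; apply: F_inj (Cstar_Ccol CS) (Cstar_Ccol C'S) (esym e).
case: (J_cases h) => [[x [y [xD _ e _ _]]]|[D [x [_ xD e _ _]]]|[D [x [DC _ e _ [hd _]]]]].
- by case: (F_ne1 (Cstar_Ccol CS) xD e).
- by case: (F_ne1 (Cstar_Ccol CS) xD e).
- by rewrite (F_inj (Cstar_Ccol CS) DC e).
Qed.

Lemma samelev K C C' : K \in closed_classes -> C \in Cstar -> C' \in Cstar ->
  Fmin C \in K -> Fmin C' \in K -> Hmin (bdry C) = Hmin (bdry C').
Proof.
move=> KC CS C'S CK C'K; apply/eqP; rewrite eq_le.
rewrite -(lev_F (Cstar_Ccol CS)) -(lev_F (Cstar_Ccol C'S)).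
by apply/andP; split; apply: conn_lev; apply: class_conn KC _ _.
Qed.

Lemma depth_ge C : C \in Cstar -> Gam <= depth C.
Proof. by rewrite CstarP => /andP[]. Qed.

Lemma nonsingle K C C' : K \in closed_classes -> C \in Cstar -> C' \in Cstar ->
  Fmin C \in K -> Fmin C' \in K -> C != C' -> Hmin (bdry C) = Hmin (UK K) + Gam.
Proof.
move=> KC CS C'S CK C'K ne.
have memb : forall D, D \in Cstar -> Fmin D \in K -> Hmin D = Hmin (bdry C) - Gam.
  move=> D DS DK.
  have hd : depth D = Gam.
    apply/eqP; rewrite eq_le depth_ge // andbT.
    case: (eqVneq D C) => [->|neD]; first exact: firstjump KC CS C'S CK C'K ne.
    exact: firstjump KC DS CS DK CK neD.
  by rewrite -hd depthE (samelev KC CS DS CK DK) opprB addrC subrK.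
have [z zK] := UK_ne KC; have [z' z'K hz'] := Hmin_ex zK.
have [D [DS DK zD]] := memUK KC z'K.
by rewrite hz'; have /FminP [_ ->] := zD; rewrite (memb D DS DK) subrK.
Qed.

Local Notation cP' P := (PhiS P (breve Pf' P)).

Lemma notin_member K C y : K \in closed_classes -> C \in Cstar -> Fmin C \in K ->
  y \in breve Pf' (UK K) -> y \notin C.
Proof.
move=> KC CS CK yb; apply/negP => yC.
have [C1 [C1S C1K yC1]] := breve'_notK KC yb.
have e := Hdisj (Cstar_Ccol CS) (Cstar_Ccol C1S) yC yC1; subst C1.
by rewrite CK in C1K.
Qed.

Lemma U1 K C : K \in closed_classes -> C \in Cstar -> Fmin C \in K ->
  Hmin (bdry C) <= cP' (UK K).
Proof.
move=> KC CS CK; have [x0 x0K] := UK_ne KC.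
have [y0 y0b] : exists y, y \in breve Pf' (UK K).
  have [Q1 [Q2 [Q1P Q2P ne]]] := card_gt1P Pf'_2.
  have [Q QP QnP] : exists2 Q, Q \in Pf' & Q != UK K.
    case: (eqVneq Q1 (UK K)) => [e|]; last by exists Q1.
    by exists Q2 => //; rewrite -e eq_sym.
  have [y yQ] := Pf'_ne QP; exists y; apply/breveP; exists Q => //; by rewrite QP QnP.
have [x [y [xK yb ->]]] := PhiS_ex x0K y0b.
have [C' [C'S C'K xC']] := memUK KC xK.
have yC' := notin_member KC C'S C'K yb.
have [w wb hw] := Phi_exit (Fmin_sub xC') yC'.
apply: le_trans hw; case: (eqVneq C C') => [->|ne]; first exact: Hmin_le.
by rewrite (samelev KC CS C'S CK C'K); exact: Hmin_le.
Qed.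

Lemma U2 K p p' : K \in closed_classes -> p \in UK K -> p' \in UK K -> Phi p p' < cP' (UK K).
Proof.
move=> KC pK p'K.
have [C [CS CK pC]] := memUK KC pK; have [C' [C'S C'K p'C]] := memUK KC p'K.
case: (eqVneq C C') => [e|ne].
  subst C'; apply: lt_le_trans (U1 KC CS CK).
  exact: Hconn (Cstar_Ccol CS) (Fmin_sub pC) (Fmin_sub p'C).
have st : isState (Fmin C) by right; exists C => //; exact: Cstar_Ccol.
have r1 : inreg (Fmin C) p by rewrite inreg_F ?(Cstar_Ccol CS) //; exact: Fmin_sub.
have r2 : inreg (Fmin C') p' by rewrite inreg_F ?(Cstar_Ccol C'S) //; exact: Fmin_sub.
have h := conn_reg (class_conn KC CK C'K) st r1 r2.
rewrite lev_F ?(Cstar_Ccol CS) // (nonsingle KC CS C'S CK C'K ne) in h.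
exact: le_lt_trans h (cP'_gt KC).
Qed.

Lemma HPc' P' p p' : P' \in Pf' -> p \in P' -> p' \in P' -> Phi p p' < cP' P'.
Proof. by case/Pf'P => K KC ->; exact: U2. Qed.

Ltac vtac := first [ assumption | exact: Pf'_ne | exact: Pf'_Om | exact: Pf'_2 | exact: HPc' ].

Lemma V'_sub P' p : P' \in Pf' -> p \in P' -> p \in V' P'.
Proof. by move=> h1 h2; apply: V_sub; vtac. Qed.

Lemma V'_ex P' x : P' \in Pf' -> x \in V' P' -> exists2 p, p \in P' & Phi p x < cP' P'.
Proof. by move=> h1 h2; apply: V_ex; vtac. Qed.

Lemma V'_bdry_ge P' w : P' \in Pf' -> w \in bdry (V' P') -> cP' P' <= H w.
Proof. by move=> h1 h2; apply: V_bdry_ge; vtac. Qed.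

Lemma V'_depth P' : P' \in Pf' -> Gam' <= depth (V' P').
Proof. by move=> h1; apply: V_depth; vtac. Qed.

Lemma goodC_of C : C \in Ccol -> goodC C.
Proof.
move=> CC; split.
- exact: Hne.
- by move=> z; exact: HOm.
- by move=> u w; exact: Hcyc.
- by move=> z z'; exact: Hconn.
- exact: Hbd.
- exact: Hbdle.
Qed.

Lemma Co'_sub C : C \in Co' -> C \in Ccol.
Proof.
rewrite /next_Cold in_setU /Cstar_tr inE => /orP[/andP[CS _]|]; first exact: Cstar_Ccol.
by rewrite CsharpP => /andP[].
Qed.

Lemma Ccol'P C : reflect ((exists2 P', P' \in Pf' & C = V' P') \/
    (C \in Co' /\ forall P', P' \in Pf' -> [disjoint C & V' P'])) (C \in Ccol').
Proof. by apply: CcolP; vtac. Qed.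

Lemma Afacts' : Afacts Pf' Co'.
Proof.
apply: Afacts_build; try vtac.
- by move=> C /Co'_sub; exact: goodC_of.
- by move=> C C' z /Co'_sub h1 /Co'_sub h2; exact: Hdisj.
Qed.

Lemma nesting C P' z : C \in Ccol -> P' \in Pf' -> z \in C -> z \in V' P' -> C \subset V' P'.
Proof.
move=> CC P'P zC zV; apply/subsetP => v vC; apply/negPn/negP => vV.
have h1 := Hconn CC zC vC.
have [w wb hw] := Phi_exit zV vV.
have h2 := V'_bdry_ge P'P wb.
have hc : cP' P' < Hmin (bdry C) := le_lt_trans h2 (le_lt_trans hw h1).
have [p pP hp] := V'_ex P'P zV.
have pC : p \in C.
  apply/negPn/negP => pC; have [w' w'b hw'] := Phi_exit zC pC.
  rewrite Phi_sym in hw'.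
  by move: (lt_trans (le_lt_trans (Hmin_le w'b) (le_lt_trans hw' hp)) hc); rewrite ltxx.
case/Pf'P: P'P => K KC eP; subst P'.
have [D [DS DK pD]] := memUK KC pP.
have eD := Hdisj (Cstar_Ccol DS) CC (Fmin_sub pD) pC; subst D.
by move: (le_lt_trans (U1 KC DS DK) hc); rewrite ltxx.
Qed.

Lemma removed_sub C : C \in Ccol -> C \notin Ccol' -> exists2 P', P' \in Pf' & C \subset V' P'.
Proof.
move=> CC CC'; case: (boolP (C \in Co')) => CCo.
  have : ~~ [forall P' in Pf', [disjoint C & V' P']].
    apply: contra CC' => /forall_inP h; apply/Ccol'P; right; split => //.
  rewrite negb_forall_in => /existsP [P' /andP[P'P]].
  rewrite -setI_eq0 => /set0Pn [z /setIP [zC zV]].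
  by exists P' => //; exact: nesting zC zV.
have CS : C \in Cstar.
  rewrite CstarP CC /= leNgt; apply/negP => hd.
  by move: CCo; rewrite /next_Cold in_setU CsharpP CC hd orbT.
have rr : recurrent (Fmin C).
  have FP : Fmin C \in Pstar by apply/PstarP; exists C.
  move: CCo; rewrite /next_Cold in_setU /Cstar_tr inE CS /= /transient inE FP /=.
  by rewrite negb_or => /andP[/negPn].
have KC : comm_class (Fmin C) \in closed_classes by apply/closed_classesP; exists (Fmin C).
have P'P : UK (comm_class (Fmin C)) \in Pf' by apply/Pf'P; exists (comm_class (Fmin C)).
have [z0 z0C] := Hne CC; have [z zF] := Fmin_ex z0C.
exists (UK (comm_class (Fmin C))) => //; apply: (nesting CC P'P (Fmin_sub zF)).
apply: V'_sub => //; apply/UKP; exists (Fmin C) => //; exact: class_self.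
Qed.

Lemma Pl' : PlG Pf' Co'.
Proof.
move=> Pi PiO Pist; have [C CC [z zPi zC]] := HPl PiO Pist.
case: (boolP (C \in Ccol')) => h; first by exists C => //; exists z.
have [P' P'P sub] := removed_sub CC h.
exists (V' P'); first by apply/Ccol'P; left; exists P'.
by exists z => //; move/subsetP: sub; apply.
Qed.

Lemma E' : EpropG Pf' Co'.
Proof.
move=> U L [z0 z0U] UOm UH Ub H4.
have noV : forall P' z, P' \in Pf' -> z \in V' P' -> z \in U -> False.
  move=> P' z P'P zV zU.
  have VC : V' P' \in Ccol' by apply/Ccol'P; left; exists P'.
  have [_ hd _] := H4 _ VC (ex_intro2 _ _ z zV zU).
  by move: (lt_le_trans hd (V'_depth P'P)); rewrite ltxx.
have clos : forall C z, C \in Ccol -> z \in C -> z \in U -> C \subset U.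
  move=> C z CC zC zU; apply/subsetP => v vC; apply/negPn/negP => vU.
  have h1 := Hconn CC zC vC.
  have [w wb hw] := Phi_exit zU vU.
  have hLC : L < Hmin (bdry C) := lt_trans (lt_le_trans (Ub w wb) hw) h1.
  pose eU := [rel a b | adj a b && (b \in U)].
  pose Q := [set v | connect eU z v].
  have Qin : forall y, connect eU z y -> y \in Q by move=> ? h; rewrite /Q inE.
  have Qout : forall y, y \in Q -> connect eU z y by move=> ?; rewrite /Q inE.
  have QU : forall y, y \in Q -> y \in U.
    move=> y /Qout /connectP [p pp ->]; exact: path_inU zU pp.
  have QC : forall y, y \in Q -> y \in C.
    move=> y yQ; apply/negPn/negP => yC'.
    have [p pp lp] := connectP (Qout y yQ).
    have hp : hpath L z y p.
      split; [by apply: sub_path pp => a b /andP[]|by rewrite lp|].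
      move=> y' y'p; apply: UH; apply: QU; apply: Qin.
      by apply: (path_connect pp).
    have [w' w'b hw'] := Phi_exit zC yC'.
    have := le_trans (Hmin_le w'b) (le_trans hw' (Phi_le_hpath hp)).
    by rewrite leNgt hLC.
  have zQ : z \in Q by apply: Qin; exact: connect0.
  have Qb : forall w, w \in bdry Q -> L < H w.
    move=> w' /bdryP [wQ [y yQ wy]]; case: (boolP (w' \in U)) => wU.
      case/negP: wQ; apply: Qin; apply: connect_trans (Qout y yQ) (connect1 _).
      by rewrite /= adj_sym wy wU.
    by apply: Ub; apply: bdry_adj (QU y yQ) wU _; rewrite adj_sym.
  have [Pi [PiQ Pist]] := @sealed_plateau Q L z zQ (fun y yQ => UH y (QU y yQ)) Qb.
  have PiO : Pi \subset Om.
    by apply/subsetP => y /(subsetP PiQ) yQ; exact: UOm (QU y yQ).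
  have [C' C'C [z' z'Pi z'C']] := Pl' PiO Pist.
  have z'Q : z' \in Q by move/subsetP: PiQ; apply.
  case/Ccol'P: C'C => [[P' P'P eC]|[C'o C'd]].
    by subst C'; apply: noV P'P z'C' (QU _ z'Q).
  have eC := Hdisj (Co'_sub C'o) CC z'C' (QC _ z'Q); subst C'.
  have CC' : C \in Ccol' by apply/Ccol'P; right.
  have [sub _ _] := H4 _ CC' (ex_intro2 _ _ z' z'C' (QU _ z'Q)).
  by move/subsetP: sub => /(_ v vC); rewrite (negbTE vU).
have keptU : forall C, C \in Ccol -> C \subset U ->
    [/\ C \in Ccol', C \in Co' & Hmin (bdry C) <= L].
  move=> C CC sub; have [z zC] := Hne CC.
  have zU : z \in U by move/subsetP: sub; apply.
  case: (boolP (C \in Ccol')) => CC'; last first.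
    have [P' P'P s2] := removed_sub CC CC'.
    by case: (noV P' z P'P (subsetP s2 z zC) zU).
  have [_ _ hL] := H4 _ CC' (ex_intro2 _ _ z zC zU).
  case/Ccol'P: (CC') => [[P' P'P eC]|[CCo _]]; last by split.
  by subst C; case: (noV P' z P'P zC zU).
pose Ust s := isState s /\ forall z, inreg s z -> z \in U.
have Ustep : forall s s', Ust s -> Jr s s' -> Ust s'.
  move=> s s' [st hs] J; have [_ st'] := J_state J; split => //.
  case: (J_cases J) => [[x [y [xD yD e1 e2 [xy yx]]]]|[C [x [CC xD e1 e2 xb]]]|[C [x [CC xD e1 e2 [_ xb]]]]];
    subst s s'.
  - have xU : x \in U by apply: hs; rewrite inreg_1.
    have yU : y \in U.
      apply/negPn/negP => yU; have := Ub y (bdry_adj xU yU xy).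
      by rewrite ltNge (le_trans yx (UH x xU)).
    by move=> z; rewrite inreg_1 // => /eqP->.
  - have xU : x \in U by apply: hs; rewrite inreg_1.
    have [_ [y0 y0C xy0]] := bdryP _ _ xb.
    have y0U : y0 \in U.
      apply/negPn/negP => y0U; have := Ub y0 (bdry_adj xU y0U xy0).
      rewrite ltNge; apply/negP/negPn.
      exact: le_trans (ltW (Hmin_C_lt CC y0C)) (le_trans (Hmin_le xb) (UH x xU)).
    have sub := clos C y0 CC y0C y0U.
    by move=> z; rewrite inreg_F // => zC; move/subsetP: sub; apply.
  - have sub : C \subset U by apply/subsetP => z zC; apply: hs; rewrite inreg_F.
    have [_ _ hL] := keptU C CC sub.
    have /FminP [xb' hx] := xb; have [_ [u uC xu]] := bdryP _ _ xb'.
    have uU : u \in U by move/subsetP: sub; apply.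
    have ux : adj u x by rewrite adj_sym.
    have xU : x \in U.
      by apply/negPn/negP => xU; have := Ub x (bdry_adj uU xU ux); rewrite ltNge hx hL.
    by move=> z; rewrite inreg_1 // => /eqP->.
have Uconn : forall s s', Ust s -> connect Jr s s' -> Ust s'.
  move=> s s' h /connectP [p pp ->]; elim: p s h pp => //= a p IH s h /andP[sa pa].
  exact: IH (Ustep _ _ h sa) pa.
have [s0 Us0] : exists s0, Ust s0.
  case: (boolP (z0 \in Delta)) => z0D.
    exists [set z0]; split; first by left; exists z0.
    by move=> z; rewrite inreg_1 // => /eqP->.
  have [C CC z0C] := notDelta (UOm z0 z0U) z0D.
  have sub := clos C z0 CC z0C z0U.
  exists (Fmin C); split; first by right; exists C.
  by move=> z; rewrite inreg_F // => zC; move/subsetP: sub; apply.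
have [b bP cb] := NTh (proj1 Us0).
have Ub' := Uconn _ _ Us0 cb.
have [r rr br] := rec_ex bP.
have Ur := Uconn _ _ Ub' (conn_of_reach br).
have [C CS er] := PstarP _ (rec_P rr).
have CC := Cstar_Ccol CS.
have sub : C \subset U by apply/subsetP => z zC; apply: (proj2 Ur); rewrite er inreg_F.
have [_ CCo _] := keptU C CC sub.
move: CCo; rewrite /next_Cold in_setU /Cstar_tr inE CS /= /transient inE -er rec_P //= rr /=.
by rewrite CsharpP CC /= ltNge depth_ge.
Qed.

Lemma step_all : Gam < Gam' /\ Inv Pf' Co'.
Proof.
split; first exact: Gam_lt.
split.
- exact: Pf'_ne.
- exact: Pf'_Om.
- exact: Pf'_2.
- exact: HPc'.
- exact: Afacts'.
- exact: Pl'.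
- exact: E'.
Qed.

End Level.

Lemma step_inv Pf Co : Inv Pf Co -> (1 < nu_lvl adj H Pf Co)%N ->
  Gstar_lvl adj H Pf < Gstar_lvl adj H (next_Pfam adj H Pf Co) /\
  Inv (next_Pfam adj H Pf Co) (next_Cold adj H Pf Co).
Proof.
case=> Pne POm P2 Pc [Agood Adisj] Pl E hnu.
have G0 : 0 < Gstar_lvl adj H Pf by apply: Gstar_pos.
apply: step_all => //.
- by move=> C /Agood [].
- by move=> C z /Agood [_ h _ _ _ _]; exact: h.
- by move=> C u w /Agood [_ _ h _ _ _]; exact: h.
- by move=> C z z' /Agood [_ _ _ h _ _]; exact: h.
- by move=> C /Agood [].
- by move=> C /Agood [].
Qed.

Lemma Pfam1P (P : {set T}) : reflect (P \subset Om /\ stable_plateau adj H P) (P \in Pfam1 adj H).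
Proof. by rewrite /Pfam1 inE; apply: (iffP andP) => -[h1 /asboolP h2]. Qed.

Lemma inv1 : (1 < #|Pfam1 adj H|)%N -> Inv (Pfam1 adj H) set0.
Proof.
move=> h2.
have Pne : forall P, P \in Pfam1 adj H -> exists z, z \in P.
  by move=> P /Pfam1P [_ [/set0Pn h _ _ _]].
have POm : forall P z, P \in Pfam1 adj H -> z \in P -> z \in Om.
  by move=> P z /Pfam1P [/subsetP h _]; exact: h.
have Pc : forall P p p', P \in Pfam1 adj H -> p \in P -> p' \in P ->
    Phi p p' < PhiS P (breve (Pfam1 adj H) P).
  move=> P p p' PP pP p'P; have [PO [Pne' Pconn Pcst Pbd]] := Pfam1P _ PP.
  have h1 : Phi p p' <= H p.
    have [q [[qp ql] qa]] := Pconn p p' pP p'P.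
    apply: (@Phi_le_hpath _ _ _ q); split => // z; rewrite inE => /orP[/eqP->//|zq].
    by rewrite (Pcst z p) //; move/allP: qa; apply.
  have [y yb] : exists y, y \in breve (Pfam1 adj H) P.
    have [Q1 [Q2 [Q1P Q2P ne]]] := card_gt1P h2.
    have [Q QP QnP] : exists2 Q, Q \in Pfam1 adj H & Q != P.
      case: (eqVneq Q1 P) => [e|]; last by exists Q1.
      by exists Q2 => //; rewrite -e eq_sym.
    have [y yQ] := Pne _ QP; exists y; apply/breveP; exists Q => //; by rewrite QP QnP.
  have [a [b [aP bb ->]]] := PhiS_ex pP yb.
  have bP : b \notin P.
    apply/negP => bP; case/breveP: bb => Q /andP[QP QnP] bQ.
    have [_ sQ] := Pfam1P _ QP.
    by move: QnP; rewrite (plateau_disj sQ (proj2 (Pfam1P _ PP)) bQ bP) eqxx.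
  have [w wb hw] := Phi_exit aP bP.
  apply: le_lt_trans h1 _; apply: lt_le_trans hw; rewrite (Pcst p a) //; exact: Pbd.
have Afac : Afacts (Pfam1 adj H) set0.
  by apply: Afacts_build => // C; rewrite inE.
have VC : forall P, P \in Pfam1 adj H -> Vset adj H (Pfam1 adj H) P \in Ccol adj H (Pfam1 adj H) set0.
  by move=> P PP; apply/CcolP => //; left; exists P.
have Pl : PlG (Pfam1 adj H) set0.
  move=> Pi PiO Pist; have PiP : Pi \in Pfam1 adj H by apply/Pfam1P.
  exists (Vset adj H (Pfam1 adj H) Pi); first exact: VC.
  have [z zPi] := Pne _ PiP; exists z => //; exact: V_sub.
split => //.
move=> U L [z zU] UOm UH Ub H4.
have [Pi [PiU Pist]] := sealed_plateau zU UH Ub.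
have PiO : Pi \subset Om by apply/subsetP => y /(subsetP PiU); exact: UOm.
have [C CC [z' z'Pi z'C]] := Pl Pi PiO Pist.
have [_ hd _] := H4 C CC (ex_intro2 _ _ z' z'C (subsetP PiU z' z'Pi)).
case/CcolP: CC => //; last by case; rewrite inE.
case=> P PP eC; subst C.
have hv : Gstar_lvl adj H (Pfam1 adj H) <= depth adj H (Vset adj H (Pfam1 adj H) P).
  by apply: V_depth.
by move: (lt_le_trans hd hv); rewrite ltxx.
Qed.

Lemma inv_k k : (forall j, (j < k.+1)%N -> (2 <= nu adj H j)%N) ->
  Inv (level adj H k.+1).1 (level adj H k.+1).2.
Proof.
elim: k => [|k IH] hnu.
  by apply: inv1; exact: (hnu 0%N).
have I := IH (fun j hj => hnu j (ltnW hj)).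
have := step_inv I (hnu k.+1 (ltnSn _)).
by case.
Qed.

Lemma main_Basics h : (2 <= h)%N -> level_defined adj H h ->
  Gamma_star adj H h.-1 < Gamma_star adj H h.
Proof.
case: h => [|[|k]] // _ hl.
have I := inv_k (k := k) (fun j hj => hl j (ltnW hj)).
have [lt _] := step_inv I (hl k.+1 (ltnSn _)).
exact: lt.
Qed.

End Basics.

Theorem mainTheorem3 (R : realType) (T : finType) (adj : rel T) (H : T -> R) :
  symmetric adj -> irreflexive adj ->
  (forall x y : T, connect adj x y) ->
  forall h : nat, (2 <= h)%N -> level_defined adj H h ->
  Gamma_star adj H h.-1 < Gamma_star adj H h.
Proof.
move=> sym _ conn h h2 hl; exact: main_Basics.
Qed.
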